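(* There exist large sets with multiplicity LS$(4,5,11;2)$, LS$(3,4,10;2)$, and LS$(5,6,12;2)$.
   Context: A Steiner system S$(t,k,n)$ is a pair $(Q,B)$ where $Q$ is an $n$-set and $B$ is a collection of $k$-subsets (blocks) of $Q$ such that every $t$-subset of $Q$ is contained in exactly one block. A large set with multiplicity $\mu$, LS$(t,k,n;\mu)$, is a family (the same system may occur more than once) of Steiner systems S$(t,k,n)$ on a common $n$-set $Q$ such that every $k$-subset of $Q$ is a block of exactly $\mu$ of the systems. *)

(* Defs.v *)
From mathcomp Require Import all_boot.
Set Implicit Arguments. Unset Strict Implicit. Unset Printing Implicit Defensive.

Definition steiner_system (t k n : nat) (B : {set {set 'I_n}}) : Prop :=
  (forall b, b \in B -> #|b| = k) /\
  (forall T : {set 'I_n}, #|T| = t -> #|[set b in B | T \subset b]| = 1).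

(* A large set with multiplicity mu, LS(t,k,n;mu): a family (list, so
   repetitions are allowed) of Steiner systems S(t,k,n) on the common n-set
   'I_n such that every k-subset of 'I_n is a block of exactly mu of them
   (counted with multiplicity). *)
Definition large_set_mult (t k n mu : nat) (L : seq {set {set 'I_n}}) : Prop :=
  (forall B, B \in L -> steiner_system t k B) /\
  (forall K : {set 'I_n}, #|K| = k -> count (fun B : {set {set 'I_n}} => K \in B) L = mu).

(* Main.v *)
Require Import Defs.
From mathcomp Require Import all_boot.
Set Implicit Arguments. Unset Strict Implicit. Unset Printing Implicit Defensive.

Definition mkmask n (b : seq bool) : {set 'I_n} := [set i : 'I_n | nth false b i].
Definition tomask n (T : {set 'I_n}) : seq bool := [seq i \in T | i <- enum 'I_n].

Fixpoint allb n : seq (seq bool) :=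
  if n is n'.+1 then map (cons true) (allb n') ++ map (cons false) (allb n') else [:: [::]].

Lemma allbP n l : size l = n -> l \in allb n.
Proof.
elim: n l => [|n IH] [|[] l] //= [] /IH H; rewrite mem_cat ?map_f ?orbT //.
Qed.

Lemma size_tomask n (T : {set 'I_n}) : size (tomask T) = n.
Proof. by rewrite size_map size_enum_ord. Qed.

Lemma tomaskK n (T : {set 'I_n}) : mkmask n (tomask T) = T.
Proof.
apply/setP => i; rewrite inE /tomask (nth_map i); last by rewrite size_enum_ord.
by rewrite nth_ord_enum.
Qed.

Lemma card_mkmask n b : size b = n -> #|mkmask n b| = count id b.
Proof.
move=> sb; rewrite cardE /enum_mem -enumT /= size_filter.
have -> : count (mem (mkmask n b)) (enum 'I_n) = count (nth false b) (map val (enum 'I_n)).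
  by rewrite count_map; apply: eq_count => i; rewrite /= inE.
by rewrite val_enum_ord -sb -[in RHS](mkseq_nth false b) /mkseq count_map.
Qed.

Definition sub_b n (b1 b2 : seq bool) := all (fun i => nth false b1 i ==> nth false b2 i) (iota 0 n).

Lemma sub_mkmask n b1 b2 : (mkmask n b1 \subset mkmask n b2) = sub_b n b1 b2.
Proof.
apply/subsetP/allP => [H i | H i].
  rewrite mem_iota add0n /= => lin; apply/implyP => h1.
  by have := H (Ordinal lin); rewrite !inE /=; apply.
by rewrite !inE => h1; have := H i; rewrite mem_iota /= ltn_ord => /(_ isT) /implyP; apply.
Qed.

Lemma mkmask_inj n b1 b2 : size b1 = n -> size b2 = n -> mkmask n b1 = mkmask n b2 -> b1 = b2.
Proof.
move=> s1 s2 e; apply: (eq_from_nth (x0 := false)); first by rewrite s1 s2.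
move=> i; rewrite s1 => lin.
by have := congr1 (fun A : {set 'I_n} => Ordinal lin \in A) e; rewrite !inE.
Qed.

Definition check_steiner_b t k n (S : seq (seq bool)) : bool :=
  [&& uniq S, all (fun b => size b == n) S, all (fun b => count id b == k) S &
   all (fun T => if count id T == t then count (fun b => sub_b n T b) S == 1 else true) (allb n)].

Lemma check_steinerP t k n S :
  check_steiner_b t k n S -> steiner_system t k [set b | b \in map (mkmask n) S].
Proof.
case/and4P=> us /allP sz /allP hk /allP hT; split.
  move=> b; rewrite inE => /mapP [c cS ->].
  by rewrite card_mkmask; [apply/eqP/hk | apply/eqP/sz].
move=> T cT.
have := hT (tomask T) (allbP (size_tomask T)).
rewrite -(card_mkmask (size_tomask T)) tomaskK cT eqxx => /eqP <-.
have uS : uniq (map (mkmask n) S).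
  rewrite map_inj_in_uniq // => x y xS yS; apply: mkmask_inj; apply/eqP; [exact: sz | exact: sz].
have -> : count (fun b => sub_b n (tomask T) b) S = count (fun B : {set 'I_n} => T \subset B) (map (mkmask n) S).
  by rewrite count_map; apply: eq_count => c /=; rewrite -sub_mkmask tomaskK.
rewrite -size_filter -(card_uniqP (filter_uniq _ uS)).
by apply: eq_card => b; rewrite !inE mem_filter andbC.
Qed.

Definition check_large_b t k n mu (L : seq (seq (seq bool))) : bool :=
  all (check_steiner_b t k n) L &&
  all (fun K => if count id K == k then count (fun S => K \in S) L == mu else true) (allb n).

Lemma check_largeP t k n mu L :
  check_large_b t k n mu L ->
  large_set_mult t k mu (map (fun S => [set b | b \in map (mkmask n) S]) L).
Proof.
case/andP=> /allP hS /allP hK; split.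
  by move=> B /mapP [S SL ->]; apply: check_steinerP; apply: hS.
move=> K cK; rewrite count_map.
have := hK (tomask K) (allbP (size_tomask K)).
rewrite -(card_mkmask (size_tomask K)) tomaskK cK eqxx => /eqP <-.
apply: eq_in_count => S SL /=; rewrite inE.
have /and4P [_ /allP sz _ _] := hS S SL.
apply/mapP/idP => [[c cS e] | KS]; last by exists (tomask K); rewrite ?tomaskK.
have -> : tomask K = c; last by [].
apply: (mkmask_inj (size_tomask K)); [exact/eqP/sz | by rewrite tomaskK].
Qed.

Definition tob n (l : seq nat) : seq bool := [seq i \in l | i <- iota 0 n].
Definition D12 : seq (seq (seq nat)) := [::
  [:: [:: 0; 1; 2; 3; 4; 6]; [:: 0; 1; 2; 3; 5; 10]; [:: 0; 1; 2; 3; 7; 8]; [:: 0; 1; 2; 3; 9; 11]; [:: 0; 1; 2; 4; 5; 8]; [:: 0; 1; 2; 4; 7; 11]; [:: 0; 1; 2; 4; 9; 10]; [:: 0; 1; 2; 5; 6; 11]; [:: 0; 1; 2; 5; 7; 9]; [:: 0; 1; 2; 6; 7; 10]; [:: 0; 1; 2; 6; 8; 9]; [:: 0; 1; 2; 8; 10; 11]; [:: 0; 1; 3; 4; 5; 9]; [:: 0; 1; 3; 4; 7; 10]; [:: 0; 1; 3; 4; 8; 11]; [:: 0; 1; 3; 5; 6; 8]; [:: 0; 1; 3; 5; 7; 11]; [:: 0; 1; 3; 6; 7; 9]; [:: 0; 1; 3; 6; 10; 11]; [:: 0; 1; 3; 8; 9; 10]; [:: 0; 1; 4; 5; 6; 7];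 [:: 0; 1; 4; 5; 10; 11]; [:: 0; 1; 4; 6; 8; 10]; [:: 0; 1; 4; 6; 9; 11]; [:: 0; 1; 4; 7; 8; 9]; [:: 0; 1; 5; 6; 9; 10]; [:: 0; 1; 5; 7; 8; 10]; [:: 0; 1; 5; 8; 9; 11]; [:: 0; 1; 6; 7; 8; 11]; [:: 0; 1; 7; 9; 10; 11]; [:: 0; 2; 3; 4; 5; 11]; [:: 0; 2; 3; 4; 7; 9]; [:: 0; 2; 3; 4; 8; 10]; [:: 0; 2; 3; 5; 6; 7]; [:: 0; 2; 3; 5; 8; 9]; [:: 0; 2; 3; 6; 8; 11]; [:: 0; 2; 3; 6; 9; 10]; [:: 0; 2; 3; 7; 10; 11]; [:: 0; 2; 4; 5; 6; 9]; [:: 0; 2; 4; 5; 7; 10]; [:: 0; 2; 4; 6; 7; 8]; [:: 0; 2; 4; 6; 10; 11]; [:: 0; 2; 4; 8; 9; 11]; [:: 0; 2; 5; 6; 8; 10]; [:: 0; 2; 5; 7; 8; 11]; [:: 0; 2; 5; 9; 10; 11]; [:: 0; 2; 6; 7; 9; 11]; [:: 0; 2; 7; 8; 9; 10]; [:: 0; 3; 4; 5; 6; 10]; [:: 0; 3; 4; 5; 7; 8]; [:: 0; 3; 4; 6; 7; 11]; [:: 0; 3; 4; 6; 8; 9]; [:: 0; 3; 4; 9; 10; 11]; [:: 0; 3; 5; 6; 9; 11]; [:: 0; 3; 5; 7; 9; 10]; [:: 0; 3; 5; 8; 10; 11]; [:: 0; 3; 6; 7; 8; 10]; [:: 0; 3;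 7; 8; 9; 11]; [:: 0; 4; 5; 6; 8; 11]; [:: 0; 4; 5; 7; 9; 11]; [:: 0; 4; 5; 8; 9; 10]; [:: 0; 4; 6; 7; 9; 10]; [:: 0; 4; 7; 8; 10; 11]; [:: 0; 5; 6; 7; 8; 9]; [:: 0; 5; 6; 7; 10; 11]; [:: 0; 6; 8; 9; 10; 11]; [:: 1; 2; 3; 4; 5; 7]; [:: 1; 2; 3; 4; 8; 9]; [:: 1; 2; 3; 4; 10; 11]; [:: 1; 2; 3; 5; 6; 9]; [:: 1; 2; 3; 5; 8; 11]; [:: 1; 2; 3; 6; 7; 11]; [:: 1; 2; 3; 6; 8; 10]; [:: 1; 2; 3; 7; 9; 10]; [:: 1; 2; 4; 5; 6; 10]; [:: 1; 2; 4; 5; 9; 11]; [:: 1; 2; 4; 6; 7; 9]; [:: 1; 2; 4; 6; 8; 11]; [:: 1; 2; 4; 7; 8; 10]; [:: 1; 2; 5; 6; 7; 8]; [:: 1; 2; 5; 7; 10; 11]; [:: 1; 2; 5; 8; 9; 10]; [:: 1; 2; 6; 9; 10; 11]; [:: 1; 2; 7; 8; 9; 11]; [:: 1; 3; 4; 5; 6; 11]; [:: 1; 3; 4; 5; 8; 10]; [:: 1; 3; 4; 6; 7; 8]; [:: 1; 3; 4; 6; 9; 10]; [:: 1; 3; 4; 7; 9; 11]; [:: 1; 3; 5; 6; 7; 10]; [:: 1; 3; 5; 7; 8; 9]; [:: 1; 3; 5; 9; 10; 11]; [:: 1; 3; 6; 8; 9; 11]; [:: 1; 3; 7; 8; 10;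 11]; [:: 1; 4; 5; 6; 8; 9]; [:: 1; 4; 5; 7; 8; 11]; [:: 1; 4; 5; 7; 9; 10]; [:: 1; 4; 6; 7; 10; 11]; [:: 1; 4; 8; 9; 10; 11]; [:: 1; 5; 6; 7; 9; 11]; [:: 1; 5; 6; 8; 10; 11]; [:: 1; 6; 7; 8; 9; 10]; [:: 2; 3; 4; 5; 6; 8]; [:: 2; 3; 4; 5; 9; 10]; [:: 2; 3; 4; 6; 7; 10]; [:: 2; 3; 4; 6; 9; 11]; [:: 2; 3; 4; 7; 8; 11]; [:: 2; 3; 5; 6; 10; 11]; [:: 2; 3; 5; 7; 8; 10]; [:: 2; 3; 5; 7; 9; 11]; [:: 2; 3; 6; 7; 8; 9]; [:: 2; 3; 8; 9; 10; 11]; [:: 2; 4; 5; 6; 7; 11]; [:: 2; 4; 5; 7; 8; 9]; [:: 2; 4; 5; 8; 10; 11]; [:: 2; 4; 6; 8; 9; 10]; [:: 2; 4; 7; 9; 10; 11]; [:: 2; 5; 6; 7; 9; 10]; [:: 2; 5; 6; 8; 9; 11]; [:: 2; 6; 7; 8; 10; 11]; [:: 3; 4; 5; 6; 7; 9]; [:: 3; 4; 5; 7; 10; 11]; [:: 3; 4; 5; 8; 9; 11]; [:: 3; 4; 6; 8; 10; 11]; [:: 3; 4; 7; 8; 9; 10]; [:: 3; 5; 6; 7; 8; 11]; [:: 3; 5; 6; 8; 9; 10]; [:: 3; 6; 7; 9; 10; 11]; [:: 4; 5; 6; 7; 8; 10]; [:: 4; 5; 6; 9; 10; 11]; [:: 4;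 6; 7; 8; 9; 11]; [:: 5; 7; 8; 9; 10; 11]];
  [:: [:: 0; 1; 2; 3; 4; 6]; [:: 0; 1; 2; 3; 5; 10]; [:: 0; 1; 2; 3; 7; 8]; [:: 0; 1; 2; 3; 9; 11]; [:: 0; 1; 2; 4; 5; 8]; [:: 0; 1; 2; 4; 7; 11]; [:: 0; 1; 2; 4; 9; 10]; [:: 0; 1; 2; 5; 6; 11]; [:: 0; 1; 2; 5; 7; 9]; [:: 0; 1; 2; 6; 7; 10]; [:: 0; 1; 2; 6; 8; 9]; [:: 0; 1; 2; 8; 10; 11]; [:: 0; 1; 3; 4; 5; 9]; [:: 0; 1; 3; 4; 7; 10]; [:: 0; 1; 3; 4; 8; 11]; [:: 0; 1; 3; 5; 6; 8]; [:: 0; 1; 3; 5; 7; 11]; [:: 0; 1; 3; 6; 7; 9]; [:: 0; 1; 3; 6; 10; 11]; [:: 0; 1; 3; 8; 9; 10]; [:: 0; 1; 4; 5; 6; 7]; [:: 0; 1; 4; 5; 10; 11]; [:: 0; 1; 4; 6; 8; 10]; [:: 0; 1; 4; 6; 9; 11]; [:: 0; 1; 4; 7; 8; 9]; [:: 0; 1; 5; 6; 9; 10]; [:: 0; 1; 5; 7; 8; 10]; [:: 0; 1; 5; 8; 9; 11]; [:: 0; 1; 6; 7; 8; 11]; [:: 0; 1; 7; 9; 10; 11]; [:: 0; 2; 3; 4; 5; 11]; [:: 0; 2; 3; 4; 7; 9]; [:: 0; 2; 3; 4; 8; 10]; [:: 0; 2; 3; 5; 6; 7]; [:: 0; 2;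 3; 5; 8; 9]; [:: 0; 2; 3; 6; 8; 11]; [:: 0; 2; 3; 6; 9; 10]; [:: 0; 2; 3; 7; 10; 11]; [:: 0; 2; 4; 5; 6; 9]; [:: 0; 2; 4; 5; 7; 10]; [:: 0; 2; 4; 6; 7; 8]; [:: 0; 2; 4; 6; 10; 11]; [:: 0; 2; 4; 8; 9; 11]; [:: 0; 2; 5; 6; 8; 10]; [:: 0; 2; 5; 7; 8; 11]; [:: 0; 2; 5; 9; 10; 11]; [:: 0; 2; 6; 7; 9; 11]; [:: 0; 2; 7; 8; 9; 10]; [:: 0; 3; 4; 5; 6; 10]; [:: 0; 3; 4; 5; 7; 8]; [:: 0; 3; 4; 6; 7; 11]; [:: 0; 3; 4; 6; 8; 9]; [:: 0; 3; 4; 9; 10; 11]; [:: 0; 3; 5; 6; 9; 11]; [:: 0; 3; 5; 7; 9; 10]; [:: 0; 3; 5; 8; 10; 11]; [:: 0; 3; 6; 7; 8; 10]; [:: 0; 3; 7; 8; 9; 11]; [:: 0; 4; 5; 6; 8; 11]; [:: 0; 4; 5; 7; 9; 11]; [:: 0; 4; 5; 8; 9; 10]; [:: 0; 4; 6; 7; 9; 10]; [:: 0; 4; 7; 8; 10; 11]; [:: 0; 5; 6; 7; 8; 9]; [:: 0; 5; 6; 7; 10; 11]; [:: 0; 6; 8; 9; 10; 11]; [:: 1; 2; 3; 4; 5; 7]; [:: 1; 2; 3; 4; 8; 9]; [:: 1; 2; 3; 4; 10; 11]; [:: 1; 2; 3; 5; 6; 9]; [:: 1; 2; 3; 5; 8;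 11]; [:: 1; 2; 3; 6; 7; 11]; [:: 1; 2; 3; 6; 8; 10]; [:: 1; 2; 3; 7; 9; 10]; [:: 1; 2; 4; 5; 6; 10]; [:: 1; 2; 4; 5; 9; 11]; [:: 1; 2; 4; 6; 7; 9]; [:: 1; 2; 4; 6; 8; 11]; [:: 1; 2; 4; 7; 8; 10]; [:: 1; 2; 5; 6; 7; 8]; [:: 1; 2; 5; 7; 10; 11]; [:: 1; 2; 5; 8; 9; 10]; [:: 1; 2; 6; 9; 10; 11]; [:: 1; 2; 7; 8; 9; 11]; [:: 1; 3; 4; 5; 6; 11]; [:: 1; 3; 4; 5; 8; 10]; [:: 1; 3; 4; 6; 7; 8]; [:: 1; 3; 4; 6; 9; 10]; [:: 1; 3; 4; 7; 9; 11]; [:: 1; 3; 5; 6; 7; 10]; [:: 1; 3; 5; 7; 8; 9]; [:: 1; 3; 5; 9; 10; 11]; [:: 1; 3; 6; 8; 9; 11]; [:: 1; 3; 7; 8; 10; 11]; [:: 1; 4; 5; 6; 8; 9]; [:: 1; 4; 5; 7; 8; 11]; [:: 1; 4; 5; 7; 9; 10]; [:: 1; 4; 6; 7; 10; 11]; [:: 1; 4; 8; 9; 10; 11]; [:: 1; 5; 6; 7; 9; 11]; [:: 1; 5; 6; 8; 10; 11]; [:: 1; 6; 7; 8; 9; 10]; [:: 2; 3; 4; 5; 6; 8]; [:: 2; 3; 4; 5; 9; 10]; [:: 2; 3; 4; 6; 7; 10]; [:: 2; 3; 4; 6; 9; 11]; [:: 2; 3; 4; 7; 8; 11]; [:: 2;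 3; 5; 6; 10; 11]; [:: 2; 3; 5; 7; 8; 10]; [:: 2; 3; 5; 7; 9; 11]; [:: 2; 3; 6; 7; 8; 9]; [:: 2; 3; 8; 9; 10; 11]; [:: 2; 4; 5; 6; 7; 11]; [:: 2; 4; 5; 7; 8; 9]; [:: 2; 4; 5; 8; 10; 11]; [:: 2; 4; 6; 8; 9; 10]; [:: 2; 4; 7; 9; 10; 11]; [:: 2; 5; 6; 7; 9; 10]; [:: 2; 5; 6; 8; 9; 11]; [:: 2; 6; 7; 8; 10; 11]; [:: 3; 4; 5; 6; 7; 9]; [:: 3; 4; 5; 7; 10; 11]; [:: 3; 4; 5; 8; 9; 11]; [:: 3; 4; 6; 8; 10; 11]; [:: 3; 4; 7; 8; 9; 10]; [:: 3; 5; 6; 7; 8; 11]; [:: 3; 5; 6; 8; 9; 10]; [:: 3; 6; 7; 9; 10; 11]; [:: 4; 5; 6; 7; 8; 10]; [:: 4; 5; 6; 9; 10; 11]; [:: 4; 6; 7; 8; 9; 11]; [:: 5; 7; 8; 9; 10; 11]];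
  [:: [:: 0; 1; 2; 3; 4; 8]; [:: 0; 1; 2; 3; 5; 6]; [:: 0; 1; 2; 3; 7; 11]; [:: 0; 1; 2; 3; 9; 10]; [:: 0; 1; 2; 4; 5; 7]; [:: 0; 1; 2; 4; 6; 10]; [:: 0; 1; 2; 4; 9; 11]; [:: 0; 1; 2; 5; 8; 9]; [:: 0; 1; 2; 5; 10; 11]; [:: 0; 1; 2; 6; 7; 9]; [:: 0; 1; 2; 6; 8; 11]; [:: 0; 1; 2; 7; 8; 10]; [:: 0; 1; 3; 4; 5; 10]; [:: 0; 1; 3; 4; 6; 11]; [:: 0; 1; 3; 4; 7; 9]; [:: 0; 1; 3; 5; 7; 8]; [:: 0; 1; 3; 5; 9; 11]; [:: 0; 1; 3; 6; 7; 10]; [:: 0; 1; 3; 6; 8; 9]; [:: 0; 1; 3; 8; 10; 11]; [:: 0; 1; 4; 5; 6; 9]; [:: 0; 1; 4; 5; 8; 11]; [:: 0; 1; 4; 6; 7; 8]; [:: 0; 1; 4; 7; 10; 11]; [:: 0; 1; 4; 8; 9; 10]; [:: 0; 1; 5; 6; 7; 11]; [:: 0; 1; 5; 6; 8; 10]; [:: 0; 1; 5; 7; 9; 10]; [:: 0; 1; 6; 9; 10; 11]; [:: 0; 1; 7; 8; 9; 11]; [:: 0; 2; 3; 4; 5; 9]; [:: 0; 2; 3; 4; 6; 7]; [:: 0; 2; 3; 4; 10; 11]; [:: 0; 2; 3; 5; 7; 10]; [:: 0; 2; 3; 5; 8; 11]; [:: 0; 2; 3; 6; 8; 10]; [:: 0;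 2; 3; 6; 9; 11]; [:: 0; 2; 3; 7; 8; 9]; [:: 0; 2; 4; 5; 6; 11]; [:: 0; 2; 4; 5; 8; 10]; [:: 0; 2; 4; 6; 8; 9]; [:: 0; 2; 4; 7; 8; 11]; [:: 0; 2; 4; 7; 9; 10]; [:: 0; 2; 5; 6; 7; 8]; [:: 0; 2; 5; 6; 9; 10]; [:: 0; 2; 5; 7; 9; 11]; [:: 0; 2; 6; 7; 10; 11]; [:: 0; 2; 8; 9; 10; 11]; [:: 0; 3; 4; 5; 6; 8]; [:: 0; 3; 4; 5; 7; 11]; [:: 0; 3; 4; 6; 9; 10]; [:: 0; 3; 4; 7; 8; 10]; [:: 0; 3; 4; 8; 9; 11]; [:: 0; 3; 5; 6; 7; 9]; [:: 0; 3; 5; 6; 10; 11]; [:: 0; 3; 5; 8; 9; 10]; [:: 0; 3; 6; 7; 8; 11]; [:: 0; 3; 7; 9; 10; 11]; [:: 0; 4; 5; 6; 7; 10]; [:: 0; 4; 5; 7; 8; 9]; [:: 0; 4; 5; 9; 10; 11]; [:: 0; 4; 6; 7; 9; 11]; [:: 0; 4; 6; 8; 10; 11]; [:: 0; 5; 6; 8; 9; 11]; [:: 0; 5; 7; 8; 10; 11]; [:: 0; 6; 7; 8; 9; 10]; [:: 1; 2; 3; 4; 5; 11]; [:: 1; 2; 3; 4; 6; 9]; [:: 1; 2; 3; 4; 7; 10]; [:: 1; 2; 3; 5; 7; 9]; [:: 1; 2; 3; 5; 8; 10]; [:: 1; 2; 3; 6; 7; 8]; [:: 1; 2; 3; 6;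 10; 11]; [:: 1; 2; 3; 8; 9; 11]; [:: 1; 2; 4; 5; 6; 8]; [:: 1; 2; 4; 5; 9; 10]; [:: 1; 2; 4; 6; 7; 11]; [:: 1; 2; 4; 7; 8; 9]; [:: 1; 2; 4; 8; 10; 11]; [:: 1; 2; 5; 6; 7; 10]; [:: 1; 2; 5; 6; 9; 11]; [:: 1; 2; 5; 7; 8; 11]; [:: 1; 2; 6; 8; 9; 10]; [:: 1; 2; 7; 9; 10; 11]; [:: 1; 3; 4; 5; 6; 7]; [:: 1; 3; 4; 5; 8; 9]; [:: 1; 3; 4; 6; 8; 10]; [:: 1; 3; 4; 7; 8; 11]; [:: 1; 3; 4; 9; 10; 11]; [:: 1; 3; 5; 6; 8; 11]; [:: 1; 3; 5; 6; 9; 10]; [:: 1; 3; 5; 7; 10; 11]; [:: 1; 3; 6; 7; 9; 11]; [:: 1; 3; 7; 8; 9; 10]; [:: 1; 4; 5; 6; 10; 11]; [:: 1; 4; 5; 7; 8; 10]; [:: 1; 4; 5; 7; 9; 11]; [:: 1; 4; 6; 7; 9; 10]; [:: 1; 4; 6; 8; 9; 11]; [:: 1; 5; 6; 7; 8; 9]; [:: 1; 5; 8; 9; 10; 11]; [:: 1; 6; 7; 8; 10; 11]; [:: 2; 3; 4; 5; 6; 10]; [:: 2; 3; 4; 5; 7; 8]; [:: 2; 3; 4; 6; 8; 11]; [:: 2; 3; 4; 7; 9; 11]; [:: 2; 3; 4; 8; 9; 10]; [:: 2; 3; 5; 6; 7; 11]; [:: 2; 3; 5; 6; 8; 9]; [::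 2; 3; 5; 9; 10; 11]; [:: 2; 3; 6; 7; 9; 10]; [:: 2; 3; 7; 8; 10; 11]; [:: 2; 4; 5; 6; 7; 9]; [:: 2; 4; 5; 7; 10; 11]; [:: 2; 4; 5; 8; 9; 11]; [:: 2; 4; 6; 7; 8; 10]; [:: 2; 4; 6; 9; 10; 11]; [:: 2; 5; 6; 8; 10; 11]; [:: 2; 5; 7; 8; 9; 10]; [:: 2; 6; 7; 8; 9; 11]; [:: 3; 4; 5; 6; 9; 11]; [:: 3; 4; 5; 7; 9; 10]; [:: 3; 4; 5; 8; 10; 11]; [:: 3; 4; 6; 7; 8; 9]; [:: 3; 4; 6; 7; 10; 11]; [:: 3; 5; 6; 7; 8; 10]; [:: 3; 5; 7; 8; 9; 11]; [:: 3; 6; 8; 9; 10; 11]; [:: 4; 5; 6; 7; 8; 11]; [:: 4; 5; 6; 8; 9; 10]; [:: 4; 7; 8; 9; 10; 11]; [:: 5; 6; 7; 9; 10; 11]];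
  [:: [:: 0; 1; 2; 3; 4; 11]; [:: 0; 1; 2; 3; 5; 9]; [:: 0; 1; 2; 3; 6; 7]; [:: 0; 1; 2; 3; 8; 10]; [:: 0; 1; 2; 4; 5; 6]; [:: 0; 1; 2; 4; 7; 10]; [:: 0; 1; 2; 4; 8; 9]; [:: 0; 1; 2; 5; 7; 8]; [:: 0; 1; 2; 5; 10; 11]; [:: 0; 1; 2; 6; 8; 11]; [:: 0; 1; 2; 6; 9; 10]; [:: 0; 1; 2; 7; 9; 11]; [:: 0; 1; 3; 4; 5; 7]; [:: 0; 1; 3; 4; 6; 8]; [:: 0; 1; 3; 4; 9; 10]; [:: 0; 1; 3; 5; 6; 10]; [:: 0; 1; 3; 5; 8; 11]; [:: 0; 1; 3; 6; 9; 11]; [:: 0; 1; 3; 7; 8; 9]; [:: 0; 1; 3; 7; 10; 11]; [:: 0; 1; 4; 5; 8; 10]; [:: 0; 1; 4; 5; 9; 11]; [:: 0; 1; 4; 6; 7; 9]; [:: 0; 1; 4; 6; 10; 11]; [:: 0; 1; 4; 7; 8; 11]; [:: 0; 1; 5; 6; 7; 11]; [:: 0; 1; 5; 6; 8; 9]; [:: 0; 1; 5; 7; 9; 10]; [:: 0; 1; 6; 7; 8; 10]; [:: 0; 1; 8; 9; 10; 11]; [:: 0; 2; 3; 4; 5; 10]; [:: 0; 2; 3; 4; 6; 9]; [:: 0; 2; 3; 4; 7; 8]; [:: 0; 2; 3; 5; 6; 8]; [:: 0; 2; 3; 5; 7; 11]; [:: 0; 2; 3; 6; 10; 11]; [:: 0;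 2; 3; 7; 9; 10]; [:: 0; 2; 3; 8; 9; 11]; [:: 0; 2; 4; 5; 7; 9]; [:: 0; 2; 4; 5; 8; 11]; [:: 0; 2; 4; 6; 7; 11]; [:: 0; 2; 4; 6; 8; 10]; [:: 0; 2; 4; 9; 10; 11]; [:: 0; 2; 5; 6; 7; 10]; [:: 0; 2; 5; 6; 9; 11]; [:: 0; 2; 5; 8; 9; 10]; [:: 0; 2; 6; 7; 8; 9]; [:: 0; 2; 7; 8; 10; 11]; [:: 0; 3; 4; 5; 6; 11]; [:: 0; 3; 4; 5; 8; 9]; [:: 0; 3; 4; 6; 7; 10]; [:: 0; 3; 4; 7; 9; 11]; [:: 0; 3; 4; 8; 10; 11]; [:: 0; 3; 5; 6; 7; 9]; [:: 0; 3; 5; 7; 8; 10]; [:: 0; 3; 5; 9; 10; 11]; [:: 0; 3; 6; 7; 8; 11]; [:: 0; 3; 6; 8; 9; 10]; [:: 0; 4; 5; 6; 7; 8]; [:: 0; 4; 5; 6; 9; 10]; [:: 0; 4; 5; 7; 10; 11]; [:: 0; 4; 6; 8; 9; 11]; [:: 0; 4; 7; 8; 9; 10]; [:: 0; 5; 6; 8; 10; 11]; [:: 0; 5; 7; 8; 9; 11]; [:: 0; 6; 7; 9; 10; 11]; [:: 1; 2; 3; 4; 5; 8]; [:: 1; 2; 3; 4; 6; 10]; [:: 1; 2; 3; 4; 7; 9]; [:: 1; 2; 3; 5; 6; 11]; [:: 1; 2; 3; 5; 7; 10]; [:: 1; 2; 3; 6; 8; 9]; [:: 1; 2; 3; 7;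 8; 11]; [:: 1; 2; 3; 9; 10; 11]; [:: 1; 2; 4; 5; 7; 11]; [:: 1; 2; 4; 5; 9; 10]; [:: 1; 2; 4; 6; 7; 8]; [:: 1; 2; 4; 6; 9; 11]; [:: 1; 2; 4; 8; 10; 11]; [:: 1; 2; 5; 6; 7; 9]; [:: 1; 2; 5; 6; 8; 10]; [:: 1; 2; 5; 8; 9; 11]; [:: 1; 2; 6; 7; 10; 11]; [:: 1; 2; 7; 8; 9; 10]; [:: 1; 3; 4; 5; 6; 9]; [:: 1; 3; 4; 5; 10; 11]; [:: 1; 3; 4; 6; 7; 11]; [:: 1; 3; 4; 7; 8; 10]; [:: 1; 3; 4; 8; 9; 11]; [:: 1; 3; 5; 6; 7; 8]; [:: 1; 3; 5; 7; 9; 11]; [:: 1; 3; 5; 8; 9; 10]; [:: 1; 3; 6; 7; 9; 10]; [:: 1; 3; 6; 8; 10; 11]; [:: 1; 4; 5; 6; 7; 10]; [:: 1; 4; 5; 6; 8; 11]; [:: 1; 4; 5; 7; 8; 9]; [:: 1; 4; 6; 8; 9; 10]; [:: 1; 4; 7; 9; 10; 11]; [:: 1; 5; 6; 9; 10; 11]; [:: 1; 5; 7; 8; 10; 11]; [:: 1; 6; 7; 8; 9; 11]; [:: 2; 3; 4; 5; 6; 7]; [:: 2; 3; 4; 5; 9; 11]; [:: 2; 3; 4; 6; 8; 11]; [:: 2; 3; 4; 7; 10; 11]; [:: 2; 3; 4; 8; 9; 10]; [:: 2; 3; 5; 6; 9; 10]; [:: 2; 3; 5; 7; 8; 9]; [::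 2; 3; 5; 8; 10; 11]; [:: 2; 3; 6; 7; 8; 10]; [:: 2; 3; 6; 7; 9; 11]; [:: 2; 4; 5; 6; 8; 9]; [:: 2; 4; 5; 6; 10; 11]; [:: 2; 4; 5; 7; 8; 10]; [:: 2; 4; 6; 7; 9; 10]; [:: 2; 4; 7; 8; 9; 11]; [:: 2; 5; 6; 7; 8; 11]; [:: 2; 5; 7; 9; 10; 11]; [:: 2; 6; 8; 9; 10; 11]; [:: 3; 4; 5; 6; 8; 10]; [:: 3; 4; 5; 7; 8; 11]; [:: 3; 4; 5; 7; 9; 10]; [:: 3; 4; 6; 7; 8; 9]; [:: 3; 4; 6; 9; 10; 11]; [:: 3; 5; 6; 7; 10; 11]; [:: 3; 5; 6; 8; 9; 11]; [:: 3; 7; 8; 9; 10; 11]; [:: 4; 5; 6; 7; 9; 11]; [:: 4; 5; 8; 9; 10; 11]; [:: 4; 6; 7; 8; 10; 11]; [:: 5; 6; 7; 8; 9; 10]];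
  [:: [:: 0; 1; 2; 3; 4; 7]; [:: 0; 1; 2; 3; 5; 11]; [:: 0; 1; 2; 3; 6; 8]; [:: 0; 1; 2; 3; 9; 10]; [:: 0; 1; 2; 4; 5; 9]; [:: 0; 1; 2; 4; 6; 10]; [:: 0; 1; 2; 4; 8; 11]; [:: 0; 1; 2; 5; 6; 7]; [:: 0; 1; 2; 5; 8; 10]; [:: 0; 1; 2; 6; 9; 11]; [:: 0; 1; 2; 7; 8; 9]; [:: 0; 1; 2; 7; 10; 11]; [:: 0; 1; 3; 4; 5; 8]; [:: 0; 1; 3; 4; 6; 9]; [:: 0; 1; 3; 4; 10; 11]; [:: 0; 1; 3; 5; 6; 10]; [:: 0; 1; 3; 5; 7; 9]; [:: 0; 1; 3; 6; 7; 11]; [:: 0; 1; 3; 7; 8; 10]; [:: 0; 1; 3; 8; 9; 11]; [:: 0; 1; 4; 5; 6; 11]; [:: 0; 1; 4; 5; 7; 10]; [:: 0; 1; 4; 6; 7; 8]; [:: 0; 1; 4; 7; 9; 11]; [:: 0; 1; 4; 8; 9; 10]; [:: 0; 1; 5; 6; 8; 9]; [:: 0; 1; 5; 7; 8; 11]; [:: 0; 1; 5; 9; 10; 11]; [:: 0; 1; 6; 7; 9; 10]; [:: 0; 1; 6; 8; 10; 11]; [:: 0; 2; 3; 4; 5; 10]; [:: 0; 2; 3; 4; 6; 11]; [:: 0; 2; 3; 4; 8; 9]; [:: 0; 2; 3; 5; 6; 9]; [:: 0; 2; 3; 5; 7; 8]; [:: 0; 2; 3; 6; 7; 10]; [:: 0;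 2; 3; 7; 9; 11]; [:: 0; 2; 3; 8; 10; 11]; [:: 0; 2; 4; 5; 6; 8]; [:: 0; 2; 4; 5; 7; 11]; [:: 0; 2; 4; 6; 7; 9]; [:: 0; 2; 4; 7; 8; 10]; [:: 0; 2; 4; 9; 10; 11]; [:: 0; 2; 5; 6; 10; 11]; [:: 0; 2; 5; 7; 9; 10]; [:: 0; 2; 5; 8; 9; 11]; [:: 0; 2; 6; 7; 8; 11]; [:: 0; 2; 6; 8; 9; 10]; [:: 0; 3; 4; 5; 6; 7]; [:: 0; 3; 4; 5; 9; 11]; [:: 0; 3; 4; 6; 8; 10]; [:: 0; 3; 4; 7; 8; 11]; [:: 0; 3; 4; 7; 9; 10]; [:: 0; 3; 5; 6; 8; 11]; [:: 0; 3; 5; 7; 10; 11]; [:: 0; 3; 5; 8; 9; 10]; [:: 0; 3; 6; 7; 8; 9]; [:: 0; 3; 6; 9; 10; 11]; [:: 0; 4; 5; 6; 9; 10]; [:: 0; 4; 5; 7; 8; 9]; [:: 0; 4; 5; 8; 10; 11]; [:: 0; 4; 6; 7; 10; 11]; [:: 0; 4; 6; 8; 9; 11]; [:: 0; 5; 6; 7; 8; 10]; [:: 0; 5; 6; 7; 9; 11]; [:: 0; 7; 8; 9; 10; 11]; [:: 1; 2; 3; 4; 5; 6]; [:: 1; 2; 3; 4; 8; 10]; [:: 1; 2; 3; 4; 9; 11]; [:: 1; 2; 3; 5; 7; 10]; [:: 1; 2; 3; 5; 8; 9]; [:: 1; 2; 3; 6; 7; 9]; [:: 1; 2; 3; 6;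 10; 11]; [:: 1; 2; 3; 7; 8; 11]; [:: 1; 2; 4; 5; 7; 8]; [:: 1; 2; 4; 5; 10; 11]; [:: 1; 2; 4; 6; 7; 11]; [:: 1; 2; 4; 6; 8; 9]; [:: 1; 2; 4; 7; 9; 10]; [:: 1; 2; 5; 6; 8; 11]; [:: 1; 2; 5; 6; 9; 10]; [:: 1; 2; 5; 7; 9; 11]; [:: 1; 2; 6; 7; 8; 10]; [:: 1; 2; 8; 9; 10; 11]; [:: 1; 3; 4; 5; 7; 11]; [:: 1; 3; 4; 5; 9; 10]; [:: 1; 3; 4; 6; 7; 10]; [:: 1; 3; 4; 6; 8; 11]; [:: 1; 3; 4; 7; 8; 9]; [:: 1; 3; 5; 6; 7; 8]; [:: 1; 3; 5; 6; 9; 11]; [:: 1; 3; 5; 8; 10; 11]; [:: 1; 3; 6; 8; 9; 10]; [:: 1; 3; 7; 9; 10; 11]; [:: 1; 4; 5; 6; 7; 9]; [:: 1; 4; 5; 6; 8; 10]; [:: 1; 4; 5; 8; 9; 11]; [:: 1; 4; 6; 9; 10; 11]; [:: 1; 4; 7; 8; 10; 11]; [:: 1; 5; 6; 7; 10; 11]; [:: 1; 5; 7; 8; 9; 10]; [:: 1; 6; 7; 8; 9; 11]; [:: 2; 3; 4; 5; 7; 9]; [:: 2; 3; 4; 5; 8; 11]; [:: 2; 3; 4; 6; 7; 8]; [:: 2; 3; 4; 6; 9; 10]; [:: 2; 3; 4; 7; 10; 11]; [:: 2; 3; 5; 6; 7; 11]; [:: 2; 3; 5; 6; 8; 10]; [::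 2; 3; 5; 9; 10; 11]; [:: 2; 3; 6; 8; 9; 11]; [:: 2; 3; 7; 8; 9; 10]; [:: 2; 4; 5; 6; 7; 10]; [:: 2; 4; 5; 6; 9; 11]; [:: 2; 4; 5; 8; 9; 10]; [:: 2; 4; 6; 8; 10; 11]; [:: 2; 4; 7; 8; 9; 11]; [:: 2; 5; 6; 7; 8; 9]; [:: 2; 5; 7; 8; 10; 11]; [:: 2; 6; 7; 9; 10; 11]; [:: 3; 4; 5; 6; 8; 9]; [:: 3; 4; 5; 6; 10; 11]; [:: 3; 4; 5; 7; 8; 10]; [:: 3; 4; 6; 7; 9; 11]; [:: 3; 4; 8; 9; 10; 11]; [:: 3; 5; 6; 7; 9; 10]; [:: 3; 5; 7; 8; 9; 11]; [:: 3; 6; 7; 8; 10; 11]; [:: 4; 5; 6; 7; 8; 11]; [:: 4; 5; 7; 9; 10; 11]; [:: 4; 6; 7; 8; 9; 10]; [:: 5; 6; 8; 9; 10; 11]];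
  [:: [:: 0; 1; 2; 3; 4; 5]; [:: 0; 1; 2; 3; 6; 10]; [:: 0; 1; 2; 3; 7; 11]; [:: 0; 1; 2; 3; 8; 9]; [:: 0; 1; 2; 4; 6; 11]; [:: 0; 1; 2; 4; 7; 9]; [:: 0; 1; 2; 4; 8; 10]; [:: 0; 1; 2; 5; 6; 9]; [:: 0; 1; 2; 5; 7; 10]; [:: 0; 1; 2; 5; 8; 11]; [:: 0; 1; 2; 6; 7; 8]; [:: 0; 1; 2; 9; 10; 11]; [:: 0; 1; 3; 4; 6; 9]; [:: 0; 1; 3; 4; 7; 8]; [:: 0; 1; 3; 4; 10; 11]; [:: 0; 1; 3; 5; 6; 7]; [:: 0; 1; 3; 5; 8; 10]; [:: 0; 1; 3; 5; 9; 11]; [:: 0; 1; 3; 6; 8; 11]; [:: 0; 1; 3; 7; 9; 10]; [:: 0; 1; 4; 5; 6; 8]; [:: 0; 1; 4; 5; 7; 11]; [:: 0; 1; 4; 5; 9; 10]; [:: 0; 1; 4; 6; 7; 10]; [:: 0; 1; 4; 8; 9; 11]; [:: 0; 1; 5; 6; 10; 11]; [:: 0; 1; 5; 7; 8; 9]; [:: 0; 1; 6; 7; 9; 11]; [:: 0; 1; 6; 8; 9; 10]; [:: 0; 1; 7; 8; 10; 11]; [:: 0; 2; 3; 4; 6; 7]; [:: 0; 2; 3; 4; 8; 11]; [:: 0; 2; 3; 4; 9; 10]; [:: 0; 2; 3; 5; 6; 8]; [:: 0; 2; 3; 5; 7; 9]; [:: 0; 2; 3; 5; 10; 11]; [:: 0;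 2; 3; 6; 9; 11]; [:: 0; 2; 3; 7; 8; 10]; [:: 0; 2; 4; 5; 6; 10]; [:: 0; 2; 4; 5; 7; 8]; [:: 0; 2; 4; 5; 9; 11]; [:: 0; 2; 4; 6; 8; 9]; [:: 0; 2; 4; 7; 10; 11]; [:: 0; 2; 5; 6; 7; 11]; [:: 0; 2; 5; 8; 9; 10]; [:: 0; 2; 6; 7; 9; 10]; [:: 0; 2; 6; 8; 10; 11]; [:: 0; 2; 7; 8; 9; 11]; [:: 0; 3; 4; 5; 6; 11]; [:: 0; 3; 4; 5; 7; 10]; [:: 0; 3; 4; 5; 8; 9]; [:: 0; 3; 4; 6; 8; 10]; [:: 0; 3; 4; 7; 9; 11]; [:: 0; 3; 5; 6; 9; 10]; [:: 0; 3; 5; 7; 8; 11]; [:: 0; 3; 6; 7; 8; 9]; [:: 0; 3; 6; 7; 10; 11]; [:: 0; 3; 8; 9; 10; 11]; [:: 0; 4; 5; 6; 7; 9]; [:: 0; 4; 5; 8; 10; 11]; [:: 0; 4; 6; 7; 8; 11]; [:: 0; 4; 6; 9; 10; 11]; [:: 0; 4; 7; 8; 9; 10]; [:: 0; 5; 6; 7; 8; 10]; [:: 0; 5; 6; 8; 9; 11]; [:: 0; 5; 7; 9; 10; 11]; [:: 1; 2; 3; 4; 6; 8]; [:: 1; 2; 3; 4; 7; 10]; [:: 1; 2; 3; 4; 9; 11]; [:: 1; 2; 3; 5; 6; 11]; [:: 1; 2; 3; 5; 7; 8]; [:: 1; 2; 3; 5; 9; 10]; [:: 1; 2; 3; 6;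 7; 9]; [:: 1; 2; 3; 8; 10; 11]; [:: 1; 2; 4; 5; 6; 7]; [:: 1; 2; 4; 5; 8; 9]; [:: 1; 2; 4; 5; 10; 11]; [:: 1; 2; 4; 6; 9; 10]; [:: 1; 2; 4; 7; 8; 11]; [:: 1; 2; 5; 6; 8; 10]; [:: 1; 2; 5; 7; 9; 11]; [:: 1; 2; 6; 7; 10; 11]; [:: 1; 2; 6; 8; 9; 11]; [:: 1; 2; 7; 8; 9; 10]; [:: 1; 3; 4; 5; 6; 10]; [:: 1; 3; 4; 5; 7; 9]; [:: 1; 3; 4; 5; 8; 11]; [:: 1; 3; 4; 6; 7; 11]; [:: 1; 3; 4; 8; 9; 10]; [:: 1; 3; 5; 6; 8; 9]; [:: 1; 3; 5; 7; 10; 11]; [:: 1; 3; 6; 7; 8; 10]; [:: 1; 3; 6; 9; 10; 11]; [:: 1; 3; 7; 8; 9; 11]; [:: 1; 4; 5; 6; 9; 11]; [:: 1; 4; 5; 7; 8; 10]; [:: 1; 4; 6; 7; 8; 9]; [:: 1; 4; 6; 8; 10; 11]; [:: 1; 4; 7; 9; 10; 11]; [:: 1; 5; 6; 7; 8; 11]; [:: 1; 5; 6; 7; 9; 10]; [:: 1; 5; 8; 9; 10; 11]; [:: 2; 3; 4; 5; 6; 9]; [:: 2; 3; 4; 5; 7; 11]; [:: 2; 3; 4; 5; 8; 10]; [:: 2; 3; 4; 6; 10; 11]; [:: 2; 3; 4; 7; 8; 9]; [:: 2; 3; 5; 6; 7; 10]; [:: 2; 3; 5; 8; 9; 11]; [::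 2; 3; 6; 7; 8; 11]; [:: 2; 3; 6; 8; 9; 10]; [:: 2; 3; 7; 9; 10; 11]; [:: 2; 4; 5; 6; 8; 11]; [:: 2; 4; 5; 7; 9; 10]; [:: 2; 4; 6; 7; 8; 10]; [:: 2; 4; 6; 7; 9; 11]; [:: 2; 4; 8; 9; 10; 11]; [:: 2; 5; 6; 7; 8; 9]; [:: 2; 5; 6; 9; 10; 11]; [:: 2; 5; 7; 8; 10; 11]; [:: 3; 4; 5; 6; 7; 8]; [:: 3; 4; 5; 9; 10; 11]; [:: 3; 4; 6; 7; 9; 10]; [:: 3; 4; 6; 8; 9; 11]; [:: 3; 4; 7; 8; 10; 11]; [:: 3; 5; 6; 7; 9; 11]; [:: 3; 5; 6; 8; 10; 11]; [:: 3; 5; 7; 8; 9; 10]; [:: 4; 5; 6; 7; 10; 11]; [:: 4; 5; 6; 8; 9; 10]; [:: 4; 5; 7; 8; 9; 11]; [:: 6; 7; 8; 9; 10; 11]];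
  [:: [:: 0; 1; 2; 3; 4; 11]; [:: 0; 1; 2; 3; 5; 8]; [:: 0; 1; 2; 3; 6; 9]; [:: 0; 1; 2; 3; 7; 10]; [:: 0; 1; 2; 4; 5; 10]; [:: 0; 1; 2; 4; 6; 8]; [:: 0; 1; 2; 4; 7; 9]; [:: 0; 1; 2; 5; 6; 7]; [:: 0; 1; 2; 5; 9; 11]; [:: 0; 1; 2; 6; 10; 11]; [:: 0; 1; 2; 7; 8; 11]; [:: 0; 1; 2; 8; 9; 10]; [:: 0; 1; 3; 4; 5; 7]; [:: 0; 1; 3; 4; 6; 10]; [:: 0; 1; 3; 4; 8; 9]; [:: 0; 1; 3; 5; 6; 11]; [:: 0; 1; 3; 5; 9; 10]; [:: 0; 1; 3; 6; 7; 8]; [:: 0; 1; 3; 7; 9; 11]; [:: 0; 1; 3; 8; 10; 11]; [:: 0; 1; 4; 5; 6; 9]; [:: 0; 1; 4; 5; 8; 11]; [:: 0; 1; 4; 6; 7; 11]; [:: 0; 1; 4; 7; 8; 10]; [:: 0; 1; 4; 9; 10; 11]; [:: 0; 1; 5; 6; 8; 10]; [:: 0; 1; 5; 7; 8; 9]; [:: 0; 1; 5; 7; 10; 11]; [:: 0; 1; 6; 7; 9; 10]; [:: 0; 1; 6; 8; 9; 11]; [:: 0; 2; 3; 4; 5; 6]; [:: 0; 2; 3; 4; 7; 8]; [:: 0; 2; 3; 4; 9; 10]; [:: 0; 2; 3; 5; 7; 9]; [:: 0; 2; 3; 5; 10; 11]; [:: 0; 2; 3; 6; 7; 11]; [:: 0;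 2; 3; 6; 8; 10]; [:: 0; 2; 3; 8; 9; 11]; [:: 0; 2; 4; 5; 7; 11]; [:: 0; 2; 4; 5; 8; 9]; [:: 0; 2; 4; 6; 7; 10]; [:: 0; 2; 4; 6; 9; 11]; [:: 0; 2; 4; 8; 10; 11]; [:: 0; 2; 5; 6; 8; 11]; [:: 0; 2; 5; 6; 9; 10]; [:: 0; 2; 5; 7; 8; 10]; [:: 0; 2; 6; 7; 8; 9]; [:: 0; 2; 7; 9; 10; 11]; [:: 0; 3; 4; 5; 8; 10]; [:: 0; 3; 4; 5; 9; 11]; [:: 0; 3; 4; 6; 7; 9]; [:: 0; 3; 4; 6; 8; 11]; [:: 0; 3; 4; 7; 10; 11]; [:: 0; 3; 5; 6; 7; 10]; [:: 0; 3; 5; 6; 8; 9]; [:: 0; 3; 5; 7; 8; 11]; [:: 0; 3; 6; 9; 10; 11]; [:: 0; 3; 7; 8; 9; 10]; [:: 0; 4; 5; 6; 7; 8]; [:: 0; 4; 5; 6; 10; 11]; [:: 0; 4; 5; 7; 9; 10]; [:: 0; 4; 6; 8; 9; 10]; [:: 0; 4; 7; 8; 9; 11]; [:: 0; 5; 6; 7; 9; 11]; [:: 0; 5; 8; 9; 10; 11]; [:: 0; 6; 7; 8; 10; 11]; [:: 1; 2; 3; 4; 5; 9]; [:: 1; 2; 3; 4; 6; 7]; [:: 1; 2; 3; 4; 8; 10]; [:: 1; 2; 3; 5; 6; 10]; [:: 1; 2; 3; 5; 7; 11]; [:: 1; 2; 3; 6; 8; 11]; [:: 1; 2; 3; 7;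 8; 9]; [:: 1; 2; 3; 9; 10; 11]; [:: 1; 2; 4; 5; 6; 11]; [:: 1; 2; 4; 5; 7; 8]; [:: 1; 2; 4; 6; 9; 10]; [:: 1; 2; 4; 7; 10; 11]; [:: 1; 2; 4; 8; 9; 11]; [:: 1; 2; 5; 6; 8; 9]; [:: 1; 2; 5; 7; 9; 10]; [:: 1; 2; 5; 8; 10; 11]; [:: 1; 2; 6; 7; 8; 10]; [:: 1; 2; 6; 7; 9; 11]; [:: 1; 3; 4; 5; 6; 8]; [:: 1; 3; 4; 5; 10; 11]; [:: 1; 3; 4; 6; 9; 11]; [:: 1; 3; 4; 7; 8; 11]; [:: 1; 3; 4; 7; 9; 10]; [:: 1; 3; 5; 6; 7; 9]; [:: 1; 3; 5; 7; 8; 10]; [:: 1; 3; 5; 8; 9; 11]; [:: 1; 3; 6; 7; 10; 11]; [:: 1; 3; 6; 8; 9; 10]; [:: 1; 4; 5; 6; 7; 10]; [:: 1; 4; 5; 7; 9; 11]; [:: 1; 4; 5; 8; 9; 10]; [:: 1; 4; 6; 7; 8; 9]; [:: 1; 4; 6; 8; 10; 11]; [:: 1; 5; 6; 7; 8; 11]; [:: 1; 5; 6; 9; 10; 11]; [:: 1; 7; 8; 9; 10; 11]; [:: 2; 3; 4; 5; 7; 10]; [:: 2; 3; 4; 5; 8; 11]; [:: 2; 3; 4; 6; 8; 9]; [:: 2; 3; 4; 6; 10; 11]; [:: 2; 3; 4; 7; 9; 11]; [:: 2; 3; 5; 6; 7; 8]; [:: 2; 3; 5; 6; 9; 11]; [::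 2; 3; 5; 8; 9; 10]; [:: 2; 3; 6; 7; 9; 10]; [:: 2; 3; 7; 8; 10; 11]; [:: 2; 4; 5; 6; 7; 9]; [:: 2; 4; 5; 6; 8; 10]; [:: 2; 4; 5; 9; 10; 11]; [:: 2; 4; 6; 7; 8; 11]; [:: 2; 4; 7; 8; 9; 10]; [:: 2; 5; 6; 7; 10; 11]; [:: 2; 5; 7; 8; 9; 11]; [:: 2; 6; 8; 9; 10; 11]; [:: 3; 4; 5; 6; 7; 11]; [:: 3; 4; 5; 6; 9; 10]; [:: 3; 4; 5; 7; 8; 9]; [:: 3; 4; 6; 7; 8; 10]; [:: 3; 4; 8; 9; 10; 11]; [:: 3; 5; 6; 8; 10; 11]; [:: 3; 5; 7; 9; 10; 11]; [:: 3; 6; 7; 8; 9; 11]; [:: 4; 5; 6; 8; 9; 11]; [:: 4; 5; 7; 8; 10; 11]; [:: 4; 6; 7; 9; 10; 11]; [:: 5; 6; 7; 8; 9; 10]];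
  [:: [:: 0; 1; 2; 3; 4; 10]; [:: 0; 1; 2; 3; 5; 7]; [:: 0; 1; 2; 3; 6; 9]; [:: 0; 1; 2; 3; 8; 11]; [:: 0; 1; 2; 4; 5; 11]; [:: 0; 1; 2; 4; 6; 7]; [:: 0; 1; 2; 4; 8; 9]; [:: 0; 1; 2; 5; 6; 8]; [:: 0; 1; 2; 5; 9; 10]; [:: 0; 1; 2; 6; 10; 11]; [:: 0; 1; 2; 7; 8; 10]; [:: 0; 1; 2; 7; 9; 11]; [:: 0; 1; 3; 4; 5; 6]; [:: 0; 1; 3; 4; 7; 8]; [:: 0; 1; 3; 4; 9; 11]; [:: 0; 1; 3; 5; 8; 9]; [:: 0; 1; 3; 5; 10; 11]; [:: 0; 1; 3; 6; 7; 11]; [:: 0; 1; 3; 6; 8; 10]; [:: 0; 1; 3; 7; 9; 10]; [:: 0; 1; 4; 5; 7; 9]; [:: 0; 1; 4; 5; 8; 10]; [:: 0; 1; 4; 6; 8; 11]; [:: 0; 1; 4; 6; 9; 10]; [:: 0; 1; 4; 7; 10; 11]; [:: 0; 1; 5; 6; 7; 10]; [:: 0; 1; 5; 6; 9; 11]; [:: 0; 1; 5; 7; 8; 11]; [:: 0; 1; 6; 7; 8; 9]; [:: 0; 1; 8; 9; 10; 11]; [:: 0; 2; 3; 4; 5; 9]; [:: 0; 2; 3; 4; 6; 8]; [:: 0; 2; 3; 4; 7; 11]; [:: 0; 2; 3; 5; 6; 11]; [:: 0; 2; 3; 5; 8; 10]; [:: 0; 2; 3; 6; 7; 10]; [:: 0;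 2; 3; 7; 8; 9]; [:: 0; 2; 3; 9; 10; 11]; [:: 0; 2; 4; 5; 6; 10]; [:: 0; 2; 4; 5; 7; 8]; [:: 0; 2; 4; 6; 9; 11]; [:: 0; 2; 4; 7; 9; 10]; [:: 0; 2; 4; 8; 10; 11]; [:: 0; 2; 5; 6; 7; 9]; [:: 0; 2; 5; 7; 10; 11]; [:: 0; 2; 5; 8; 9; 11]; [:: 0; 2; 6; 7; 8; 11]; [:: 0; 2; 6; 8; 9; 10]; [:: 0; 3; 4; 5; 7; 10]; [:: 0; 3; 4; 5; 8; 11]; [:: 0; 3; 4; 6; 7; 9]; [:: 0; 3; 4; 6; 10; 11]; [:: 0; 3; 4; 8; 9; 10]; [:: 0; 3; 5; 6; 7; 8]; [:: 0; 3; 5; 6; 9; 10]; [:: 0; 3; 5; 7; 9; 11]; [:: 0; 3; 6; 8; 9; 11]; [:: 0; 3; 7; 8; 10; 11]; [:: 0; 4; 5; 6; 7; 11]; [:: 0; 4; 5; 6; 8; 9]; [:: 0; 4; 5; 9; 10; 11]; [:: 0; 4; 6; 7; 8; 10]; [:: 0; 4; 7; 8; 9; 11]; [:: 0; 5; 6; 8; 10; 11]; [:: 0; 5; 7; 8; 9; 10]; [:: 0; 6; 7; 9; 10; 11]; [:: 1; 2; 3; 4; 5; 8]; [:: 1; 2; 3; 4; 6; 11]; [:: 1; 2; 3; 4; 7; 9]; [:: 1; 2; 3; 5; 6; 10]; [:: 1; 2; 3; 5; 9; 11]; [:: 1; 2; 3; 6; 7; 8]; [:: 1; 2; 3; 7;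 10; 11]; [:: 1; 2; 3; 8; 9; 10]; [:: 1; 2; 4; 5; 6; 9]; [:: 1; 2; 4; 5; 7; 10]; [:: 1; 2; 4; 6; 8; 10]; [:: 1; 2; 4; 7; 8; 11]; [:: 1; 2; 4; 9; 10; 11]; [:: 1; 2; 5; 6; 7; 11]; [:: 1; 2; 5; 7; 8; 9]; [:: 1; 2; 5; 8; 10; 11]; [:: 1; 2; 6; 7; 9; 10]; [:: 1; 2; 6; 8; 9; 11]; [:: 1; 3; 4; 5; 7; 11]; [:: 1; 3; 4; 5; 9; 10]; [:: 1; 3; 4; 6; 7; 10]; [:: 1; 3; 4; 6; 8; 9]; [:: 1; 3; 4; 8; 10; 11]; [:: 1; 3; 5; 6; 7; 9]; [:: 1; 3; 5; 6; 8; 11]; [:: 1; 3; 5; 7; 8; 10]; [:: 1; 3; 6; 9; 10; 11]; [:: 1; 3; 7; 8; 9; 11]; [:: 1; 4; 5; 6; 7; 8]; [:: 1; 4; 5; 6; 10; 11]; [:: 1; 4; 5; 8; 9; 11]; [:: 1; 4; 6; 7; 9; 11]; [:: 1; 4; 7; 8; 9; 10]; [:: 1; 5; 6; 8; 9; 10]; [:: 1; 5; 7; 9; 10; 11]; [:: 1; 6; 7; 8; 10; 11]; [:: 2; 3; 4; 5; 6; 7]; [:: 2; 3; 4; 5; 10; 11]; [:: 2; 3; 4; 6; 9; 10]; [:: 2; 3; 4; 7; 8; 10]; [:: 2; 3; 4; 8; 9; 11]; [:: 2; 3; 5; 6; 8; 9]; [:: 2; 3; 5; 7; 8; 11]; [::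 2; 3; 5; 7; 9; 10]; [:: 2; 3; 6; 7; 9; 11]; [:: 2; 3; 6; 8; 10; 11]; [:: 2; 4; 5; 6; 8; 11]; [:: 2; 4; 5; 7; 9; 11]; [:: 2; 4; 5; 8; 9; 10]; [:: 2; 4; 6; 7; 8; 9]; [:: 2; 4; 6; 7; 10; 11]; [:: 2; 5; 6; 7; 8; 10]; [:: 2; 5; 6; 9; 10; 11]; [:: 2; 7; 8; 9; 10; 11]; [:: 3; 4; 5; 6; 8; 10]; [:: 3; 4; 5; 6; 9; 11]; [:: 3; 4; 5; 7; 8; 9]; [:: 3; 4; 6; 7; 8; 11]; [:: 3; 4; 7; 9; 10; 11]; [:: 3; 5; 6; 7; 10; 11]; [:: 3; 5; 8; 9; 10; 11]; [:: 3; 6; 7; 8; 9; 10]; [:: 4; 5; 6; 7; 9; 10]; [:: 4; 5; 7; 8; 10; 11]; [:: 4; 6; 8; 9; 10; 11]; [:: 5; 6; 7; 8; 9; 11]];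
  [:: [:: 0; 1; 2; 3; 4; 9]; [:: 0; 1; 2; 3; 5; 8]; [:: 0; 1; 2; 3; 6; 11]; [:: 0; 1; 2; 3; 7; 10]; [:: 0; 1; 2; 4; 5; 10]; [:: 0; 1; 2; 4; 6; 7]; [:: 0; 1; 2; 4; 8; 11]; [:: 0; 1; 2; 5; 6; 9]; [:: 0; 1; 2; 5; 7; 11]; [:: 0; 1; 2; 6; 8; 10]; [:: 0; 1; 2; 7; 8; 9]; [:: 0; 1; 2; 9; 10; 11]; [:: 0; 1; 3; 4; 5; 6]; [:: 0; 1; 3; 4; 7; 11]; [:: 0; 1; 3; 4; 8; 10]; [:: 0; 1; 3; 5; 7; 9]; [:: 0; 1; 3; 5; 10; 11]; [:: 0; 1; 3; 6; 7; 8]; [:: 0; 1; 3; 6; 9; 10]; [:: 0; 1; 3; 8; 9; 11]; [:: 0; 1; 4; 5; 7; 8]; [:: 0; 1; 4; 5; 9; 11]; [:: 0; 1; 4; 6; 8; 9]; [:: 0; 1; 4; 6; 10; 11]; [:: 0; 1; 4; 7; 9; 10]; [:: 0; 1; 5; 6; 7; 10]; [:: 0; 1; 5; 6; 8; 11]; [:: 0; 1; 5; 8; 9; 10]; [:: 0; 1; 6; 7; 9; 11]; [:: 0; 1; 7; 8; 10; 11]; [:: 0; 2; 3; 4; 5; 7]; [:: 0; 2; 3; 4; 6; 8]; [:: 0; 2; 3; 4; 10; 11]; [:: 0; 2; 3; 5; 6; 10]; [:: 0; 2; 3; 5; 9; 11]; [:: 0; 2; 3; 6; 7; 9]; [:: 0;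 2; 3; 7; 8; 11]; [:: 0; 2; 3; 8; 9; 10]; [:: 0; 2; 4; 5; 6; 11]; [:: 0; 2; 4; 5; 8; 9]; [:: 0; 2; 4; 6; 9; 10]; [:: 0; 2; 4; 7; 8; 10]; [:: 0; 2; 4; 7; 9; 11]; [:: 0; 2; 5; 6; 7; 8]; [:: 0; 2; 5; 7; 9; 10]; [:: 0; 2; 5; 8; 10; 11]; [:: 0; 2; 6; 7; 10; 11]; [:: 0; 2; 6; 8; 9; 11]; [:: 0; 3; 4; 5; 8; 11]; [:: 0; 3; 4; 5; 9; 10]; [:: 0; 3; 4; 6; 7; 10]; [:: 0; 3; 4; 6; 9; 11]; [:: 0; 3; 4; 7; 8; 9]; [:: 0; 3; 5; 6; 7; 11]; [:: 0; 3; 5; 6; 8; 9]; [:: 0; 3; 5; 7; 8; 10]; [:: 0; 3; 6; 8; 10; 11]; [:: 0; 3; 7; 9; 10; 11]; [:: 0; 4; 5; 6; 7; 9]; [:: 0; 4; 5; 6; 8; 10]; [:: 0; 4; 5; 7; 10; 11]; [:: 0; 4; 6; 7; 8; 11]; [:: 0; 4; 8; 9; 10; 11]; [:: 0; 5; 6; 9; 10; 11]; [:: 0; 5; 7; 8; 9; 11]; [:: 0; 6; 7; 8; 9; 10]; [:: 1; 2; 3; 4; 5; 11]; [:: 1; 2; 3; 4; 6; 10]; [:: 1; 2; 3; 4; 7; 8]; [:: 1; 2; 3; 5; 6; 7]; [:: 1; 2; 3; 5; 9; 10]; [:: 1; 2; 3; 6; 8; 9]; [:: 1; 2; 3; 7;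 9; 11]; [:: 1; 2; 3; 8; 10; 11]; [:: 1; 2; 4; 5; 6; 8]; [:: 1; 2; 4; 5; 7; 9]; [:: 1; 2; 4; 6; 9; 11]; [:: 1; 2; 4; 7; 10; 11]; [:: 1; 2; 4; 8; 9; 10]; [:: 1; 2; 5; 6; 10; 11]; [:: 1; 2; 5; 7; 8; 10]; [:: 1; 2; 5; 8; 9; 11]; [:: 1; 2; 6; 7; 8; 11]; [:: 1; 2; 6; 7; 9; 10]; [:: 1; 3; 4; 5; 7; 10]; [:: 1; 3; 4; 5; 8; 9]; [:: 1; 3; 4; 6; 7; 9]; [:: 1; 3; 4; 6; 8; 11]; [:: 1; 3; 4; 9; 10; 11]; [:: 1; 3; 5; 6; 8; 10]; [:: 1; 3; 5; 6; 9; 11]; [:: 1; 3; 5; 7; 8; 11]; [:: 1; 3; 6; 7; 10; 11]; [:: 1; 3; 7; 8; 9; 10]; [:: 1; 4; 5; 6; 7; 11]; [:: 1; 4; 5; 6; 9; 10]; [:: 1; 4; 5; 8; 10; 11]; [:: 1; 4; 6; 7; 8; 10]; [:: 1; 4; 7; 8; 9; 11]; [:: 1; 5; 6; 7; 8; 9]; [:: 1; 5; 7; 9; 10; 11]; [:: 1; 6; 8; 9; 10; 11]; [:: 2; 3; 4; 5; 6; 9]; [:: 2; 3; 4; 5; 8; 10]; [:: 2; 3; 4; 6; 7; 11]; [:: 2; 3; 4; 7; 9; 10]; [:: 2; 3; 4; 8; 9; 11]; [:: 2; 3; 5; 6; 8; 11]; [:: 2; 3; 5; 7; 8; 9]; [::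 2; 3; 5; 7; 10; 11]; [:: 2; 3; 6; 7; 8; 10]; [:: 2; 3; 6; 9; 10; 11]; [:: 2; 4; 5; 6; 7; 10]; [:: 2; 4; 5; 7; 8; 11]; [:: 2; 4; 5; 9; 10; 11]; [:: 2; 4; 6; 7; 8; 9]; [:: 2; 4; 6; 8; 10; 11]; [:: 2; 5; 6; 7; 9; 11]; [:: 2; 5; 6; 8; 9; 10]; [:: 2; 7; 8; 9; 10; 11]; [:: 3; 4; 5; 6; 7; 8]; [:: 3; 4; 5; 6; 10; 11]; [:: 3; 4; 5; 7; 9; 11]; [:: 3; 4; 6; 8; 9; 10]; [:: 3; 4; 7; 8; 10; 11]; [:: 3; 5; 6; 7; 9; 10]; [:: 3; 5; 8; 9; 10; 11]; [:: 3; 6; 7; 8; 9; 11]; [:: 4; 5; 6; 8; 9; 11]; [:: 4; 5; 7; 8; 9; 10]; [:: 4; 6; 7; 9; 10; 11]; [:: 5; 6; 7; 8; 10; 11]];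
  [:: [:: 0; 1; 2; 3; 4; 7]; [:: 0; 1; 2; 3; 5; 9]; [:: 0; 1; 2; 3; 6; 8]; [:: 0; 1; 2; 3; 10; 11]; [:: 0; 1; 2; 4; 5; 11]; [:: 0; 1; 2; 4; 6; 9]; [:: 0; 1; 2; 4; 8; 10]; [:: 0; 1; 2; 5; 6; 10]; [:: 0; 1; 2; 5; 7; 8]; [:: 0; 1; 2; 6; 7; 11]; [:: 0; 1; 2; 7; 9; 10]; [:: 0; 1; 2; 8; 9; 11]; [:: 0; 1; 3; 4; 5; 10]; [:: 0; 1; 3; 4; 6; 11]; [:: 0; 1; 3; 4; 8; 9]; [:: 0; 1; 3; 5; 6; 7]; [:: 0; 1; 3; 5; 8; 11]; [:: 0; 1; 3; 6; 9; 10]; [:: 0; 1; 3; 7; 8; 10]; [:: 0; 1; 3; 7; 9; 11]; [:: 0; 1; 4; 5; 6; 8]; [:: 0; 1; 4; 5; 7; 9]; [:: 0; 1; 4; 6; 7; 10]; [:: 0; 1; 4; 7; 8; 11]; [:: 0; 1; 4; 9; 10; 11]; [:: 0; 1; 5; 6; 9; 11]; [:: 0; 1; 5; 7; 10; 11]; [:: 0; 1; 5; 8; 9; 10]; [:: 0; 1; 6; 7; 8; 9]; [:: 0; 1; 6; 8; 10; 11]; [:: 0; 2; 3; 4; 5; 8]; [:: 0; 2; 3; 4; 6; 10]; [:: 0; 2; 3; 4; 9; 11]; [:: 0; 2; 3; 5; 6; 11]; [:: 0; 2; 3; 5; 7; 10]; [:: 0; 2; 3; 6; 7; 9]; [:: 0;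 2; 3; 7; 8; 11]; [:: 0; 2; 3; 8; 9; 10]; [:: 0; 2; 4; 5; 6; 7]; [:: 0; 2; 4; 5; 9; 10]; [:: 0; 2; 4; 6; 8; 11]; [:: 0; 2; 4; 7; 8; 9]; [:: 0; 2; 4; 7; 10; 11]; [:: 0; 2; 5; 6; 8; 9]; [:: 0; 2; 5; 7; 9; 11]; [:: 0; 2; 5; 8; 10; 11]; [:: 0; 2; 6; 7; 8; 10]; [:: 0; 2; 6; 9; 10; 11]; [:: 0; 3; 4; 5; 6; 9]; [:: 0; 3; 4; 5; 7; 11]; [:: 0; 3; 4; 6; 7; 8]; [:: 0; 3; 4; 7; 9; 10]; [:: 0; 3; 4; 8; 10; 11]; [:: 0; 3; 5; 6; 8; 10]; [:: 0; 3; 5; 7; 8; 9]; [:: 0; 3; 5; 9; 10; 11]; [:: 0; 3; 6; 7; 10; 11]; [:: 0; 3; 6; 8; 9; 11]; [:: 0; 4; 5; 6; 10; 11]; [:: 0; 4; 5; 7; 8; 10]; [:: 0; 4; 5; 8; 9; 11]; [:: 0; 4; 6; 7; 9; 11]; [:: 0; 4; 6; 8; 9; 10]; [:: 0; 5; 6; 7; 8; 11]; [:: 0; 5; 6; 7; 9; 10]; [:: 0; 7; 8; 9; 10; 11]; [:: 1; 2; 3; 4; 5; 6]; [:: 1; 2; 3; 4; 8; 11]; [:: 1; 2; 3; 4; 9; 10]; [:: 1; 2; 3; 5; 7; 11]; [:: 1; 2; 3; 5; 8; 10]; [:: 1; 2; 3; 6; 7; 10]; [:: 1; 2; 3; 6;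 9; 11]; [:: 1; 2; 3; 7; 8; 9]; [:: 1; 2; 4; 5; 7; 10]; [:: 1; 2; 4; 5; 8; 9]; [:: 1; 2; 4; 6; 7; 8]; [:: 1; 2; 4; 6; 10; 11]; [:: 1; 2; 4; 7; 9; 11]; [:: 1; 2; 5; 6; 7; 9]; [:: 1; 2; 5; 6; 8; 11]; [:: 1; 2; 5; 9; 10; 11]; [:: 1; 2; 6; 8; 9; 10]; [:: 1; 2; 7; 8; 10; 11]; [:: 1; 3; 4; 5; 7; 8]; [:: 1; 3; 4; 5; 9; 11]; [:: 1; 3; 4; 6; 7; 9]; [:: 1; 3; 4; 6; 8; 10]; [:: 1; 3; 4; 7; 10; 11]; [:: 1; 3; 5; 6; 8; 9]; [:: 1; 3; 5; 6; 10; 11]; [:: 1; 3; 5; 7; 9; 10]; [:: 1; 3; 6; 7; 8; 11]; [:: 1; 3; 8; 9; 10; 11]; [:: 1; 4; 5; 6; 7; 11]; [:: 1; 4; 5; 6; 9; 10]; [:: 1; 4; 5; 8; 10; 11]; [:: 1; 4; 6; 8; 9; 11]; [:: 1; 4; 7; 8; 9; 10]; [:: 1; 5; 6; 7; 8; 10]; [:: 1; 5; 7; 8; 9; 11]; [:: 1; 6; 7; 9; 10; 11]; [:: 2; 3; 4; 5; 7; 9]; [:: 2; 3; 4; 5; 10; 11]; [:: 2; 3; 4; 6; 7; 11]; [:: 2; 3; 4; 6; 8; 9]; [:: 2; 3; 4; 7; 8; 10]; [:: 2; 3; 5; 6; 7; 8]; [:: 2; 3; 5; 6; 9; 10]; [::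 2; 3; 5; 8; 9; 11]; [:: 2; 3; 6; 8; 10; 11]; [:: 2; 3; 7; 9; 10; 11]; [:: 2; 4; 5; 6; 8; 10]; [:: 2; 4; 5; 6; 9; 11]; [:: 2; 4; 5; 7; 8; 11]; [:: 2; 4; 6; 7; 9; 10]; [:: 2; 4; 8; 9; 10; 11]; [:: 2; 5; 6; 7; 10; 11]; [:: 2; 5; 7; 8; 9; 10]; [:: 2; 6; 7; 8; 9; 11]; [:: 3; 4; 5; 6; 7; 10]; [:: 3; 4; 5; 6; 8; 11]; [:: 3; 4; 5; 8; 9; 10]; [:: 3; 4; 6; 9; 10; 11]; [:: 3; 4; 7; 8; 9; 11]; [:: 3; 5; 6; 7; 9; 11]; [:: 3; 5; 7; 8; 10; 11]; [:: 3; 6; 7; 8; 9; 10]; [:: 4; 5; 6; 7; 8; 9]; [:: 4; 5; 7; 9; 10; 11]; [:: 4; 6; 7; 8; 10; 11]; [:: 5; 6; 8; 9; 10; 11]];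
  [:: [:: 0; 1; 2; 3; 4; 8]; [:: 0; 1; 2; 3; 5; 6]; [:: 0; 1; 2; 3; 7; 9]; [:: 0; 1; 2; 3; 10; 11]; [:: 0; 1; 2; 4; 5; 9]; [:: 0; 1; 2; 4; 6; 11]; [:: 0; 1; 2; 4; 7; 10]; [:: 0; 1; 2; 5; 7; 11]; [:: 0; 1; 2; 5; 8; 10]; [:: 0; 1; 2; 6; 7; 8]; [:: 0; 1; 2; 6; 9; 10]; [:: 0; 1; 2; 8; 9; 11]; [:: 0; 1; 3; 4; 5; 11]; [:: 0; 1; 3; 4; 6; 7]; [:: 0; 1; 3; 4; 9; 10]; [:: 0; 1; 3; 5; 7; 10]; [:: 0; 1; 3; 5; 8; 9]; [:: 0; 1; 3; 6; 8; 10]; [:: 0; 1; 3; 6; 9; 11]; [:: 0; 1; 3; 7; 8; 11]; [:: 0; 1; 4; 5; 6; 10]; [:: 0; 1; 4; 5; 7; 8]; [:: 0; 1; 4; 6; 8; 9]; [:: 0; 1; 4; 7; 9; 11]; [:: 0; 1; 4; 8; 10; 11]; [:: 0; 1; 5; 6; 7; 9]; [:: 0; 1; 5; 6; 8; 11]; [:: 0; 1; 5; 9; 10; 11]; [:: 0; 1; 6; 7; 10; 11]; [:: 0; 1; 7; 8; 9; 10]; [:: 0; 2; 3; 4; 5; 7]; [:: 0; 2; 3; 4; 6; 10]; [:: 0; 2; 3; 4; 9; 11]; [:: 0; 2; 3; 5; 8; 11]; [:: 0; 2; 3; 5; 9; 10]; [:: 0; 2; 3; 6; 7; 11]; [:: 0;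 2; 3; 6; 8; 9]; [:: 0; 2; 3; 7; 8; 10]; [:: 0; 2; 4; 5; 6; 8]; [:: 0; 2; 4; 5; 10; 11]; [:: 0; 2; 4; 6; 7; 9]; [:: 0; 2; 4; 7; 8; 11]; [:: 0; 2; 4; 8; 9; 10]; [:: 0; 2; 5; 6; 7; 10]; [:: 0; 2; 5; 6; 9; 11]; [:: 0; 2; 5; 7; 8; 9]; [:: 0; 2; 6; 8; 10; 11]; [:: 0; 2; 7; 9; 10; 11]; [:: 0; 3; 4; 5; 6; 9]; [:: 0; 3; 4; 5; 8; 10]; [:: 0; 3; 4; 6; 8; 11]; [:: 0; 3; 4; 7; 8; 9]; [:: 0; 3; 4; 7; 10; 11]; [:: 0; 3; 5; 6; 7; 8]; [:: 0; 3; 5; 6; 10; 11]; [:: 0; 3; 5; 7; 9; 11]; [:: 0; 3; 6; 7; 9; 10]; [:: 0; 3; 8; 9; 10; 11]; [:: 0; 4; 5; 6; 7; 11]; [:: 0; 4; 5; 7; 9; 10]; [:: 0; 4; 5; 8; 9; 11]; [:: 0; 4; 6; 7; 8; 10]; [:: 0; 4; 6; 9; 10; 11]; [:: 0; 5; 6; 8; 9; 10]; [:: 0; 5; 7; 8; 10; 11]; [:: 0; 6; 7; 8; 9; 11]; [:: 1; 2; 3; 4; 5; 10]; [:: 1; 2; 3; 4; 6; 9]; [:: 1; 2; 3; 4; 7; 11]; [:: 1; 2; 3; 5; 7; 8]; [:: 1; 2; 3; 5; 9; 11]; [:: 1; 2; 3; 6; 7; 10]; [:: 1; 2; 3; 6;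 8; 11]; [:: 1; 2; 3; 8; 9; 10]; [:: 1; 2; 4; 5; 6; 7]; [:: 1; 2; 4; 5; 8; 11]; [:: 1; 2; 4; 6; 8; 10]; [:: 1; 2; 4; 7; 8; 9]; [:: 1; 2; 4; 9; 10; 11]; [:: 1; 2; 5; 6; 8; 9]; [:: 1; 2; 5; 6; 10; 11]; [:: 1; 2; 5; 7; 9; 10]; [:: 1; 2; 6; 7; 9; 11]; [:: 1; 2; 7; 8; 10; 11]; [:: 1; 3; 4; 5; 6; 8]; [:: 1; 3; 4; 5; 7; 9]; [:: 1; 3; 4; 6; 10; 11]; [:: 1; 3; 4; 7; 8; 10]; [:: 1; 3; 4; 8; 9; 11]; [:: 1; 3; 5; 6; 7; 11]; [:: 1; 3; 5; 6; 9; 10]; [:: 1; 3; 5; 8; 10; 11]; [:: 1; 3; 6; 7; 8; 9]; [:: 1; 3; 7; 9; 10; 11]; [:: 1; 4; 5; 6; 9; 11]; [:: 1; 4; 5; 7; 10; 11]; [:: 1; 4; 5; 8; 9; 10]; [:: 1; 4; 6; 7; 8; 11]; [:: 1; 4; 6; 7; 9; 10]; [:: 1; 5; 6; 7; 8; 10]; [:: 1; 5; 7; 8; 9; 11]; [:: 1; 6; 8; 9; 10; 11]; [:: 2; 3; 4; 5; 6; 11]; [:: 2; 3; 4; 5; 8; 9]; [:: 2; 3; 4; 6; 7; 8]; [:: 2; 3; 4; 7; 9; 10]; [:: 2; 3; 4; 8; 10; 11]; [:: 2; 3; 5; 6; 7; 9]; [:: 2; 3; 5; 6; 8; 10]; [::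 2; 3; 5; 7; 10; 11]; [:: 2; 3; 6; 9; 10; 11]; [:: 2; 3; 7; 8; 9; 11]; [:: 2; 4; 5; 6; 9; 10]; [:: 2; 4; 5; 7; 8; 10]; [:: 2; 4; 5; 7; 9; 11]; [:: 2; 4; 6; 7; 10; 11]; [:: 2; 4; 6; 8; 9; 11]; [:: 2; 5; 6; 7; 8; 11]; [:: 2; 5; 8; 9; 10; 11]; [:: 2; 6; 7; 8; 9; 10]; [:: 3; 4; 5; 6; 7; 10]; [:: 3; 4; 5; 7; 8; 11]; [:: 3; 4; 5; 9; 10; 11]; [:: 3; 4; 6; 7; 9; 11]; [:: 3; 4; 6; 8; 9; 10]; [:: 3; 5; 6; 8; 9; 11]; [:: 3; 5; 7; 8; 9; 10]; [:: 3; 6; 7; 8; 10; 11]; [:: 4; 5; 6; 7; 8; 9]; [:: 4; 5; 6; 8; 10; 11]; [:: 4; 7; 8; 9; 10; 11]; [:: 5; 6; 7; 9; 10; 11]];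
  [:: [:: 0; 1; 2; 3; 4; 10]; [:: 0; 1; 2; 3; 5; 7]; [:: 0; 1; 2; 3; 6; 11]; [:: 0; 1; 2; 3; 8; 9]; [:: 0; 1; 2; 4; 5; 6]; [:: 0; 1; 2; 4; 7; 8]; [:: 0; 1; 2; 4; 9; 11]; [:: 0; 1; 2; 5; 8; 11]; [:: 0; 1; 2; 5; 9; 10]; [:: 0; 1; 2; 6; 7; 9]; [:: 0; 1; 2; 6; 8; 10]; [:: 0; 1; 2; 7; 10; 11]; [:: 0; 1; 3; 4; 5; 11]; [:: 0; 1; 3; 4; 6; 8]; [:: 0; 1; 3; 4; 7; 9]; [:: 0; 1; 3; 5; 6; 9]; [:: 0; 1; 3; 5; 8; 10]; [:: 0; 1; 3; 6; 7; 10]; [:: 0; 1; 3; 7; 8; 11]; [:: 0; 1; 3; 9; 10; 11]; [:: 0; 1; 4; 5; 7; 10]; [:: 0; 1; 4; 5; 8; 9]; [:: 0; 1; 4; 6; 7; 11]; [:: 0; 1; 4; 6; 9; 10]; [:: 0; 1; 4; 8; 10; 11]; [:: 0; 1; 5; 6; 7; 8]; [:: 0; 1; 5; 6; 10; 11]; [:: 0; 1; 5; 7; 9; 11]; [:: 0; 1; 6; 8; 9; 11]; [:: 0; 1; 7; 8; 9; 10]; [:: 0; 2; 3; 4; 5; 8]; [:: 0; 2; 3; 4; 6; 9]; [:: 0; 2; 3; 4; 7; 11]; [:: 0; 2; 3; 5; 6; 10]; [:: 0; 2; 3; 5; 9; 11]; [:: 0; 2; 3; 6; 7; 8]; [:: 0;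 2; 3; 7; 9; 10]; [:: 0; 2; 3; 8; 10; 11]; [:: 0; 2; 4; 5; 7; 9]; [:: 0; 2; 4; 5; 10; 11]; [:: 0; 2; 4; 6; 7; 10]; [:: 0; 2; 4; 6; 8; 11]; [:: 0; 2; 4; 8; 9; 10]; [:: 0; 2; 5; 6; 7; 11]; [:: 0; 2; 5; 6; 8; 9]; [:: 0; 2; 5; 7; 8; 10]; [:: 0; 2; 6; 9; 10; 11]; [:: 0; 2; 7; 8; 9; 11]; [:: 0; 3; 4; 5; 6; 7]; [:: 0; 3; 4; 5; 9; 10]; [:: 0; 3; 4; 6; 10; 11]; [:: 0; 3; 4; 7; 8; 10]; [:: 0; 3; 4; 8; 9; 11]; [:: 0; 3; 5; 6; 8; 11]; [:: 0; 3; 5; 7; 8; 9]; [:: 0; 3; 5; 7; 10; 11]; [:: 0; 3; 6; 7; 9; 11]; [:: 0; 3; 6; 8; 9; 10]; [:: 0; 4; 5; 6; 8; 10]; [:: 0; 4; 5; 6; 9; 11]; [:: 0; 4; 5; 7; 8; 11]; [:: 0; 4; 6; 7; 8; 9]; [:: 0; 4; 7; 9; 10; 11]; [:: 0; 5; 6; 7; 9; 10]; [:: 0; 5; 8; 9; 10; 11]; [:: 0; 6; 7; 8; 10; 11]; [:: 1; 2; 3; 4; 5; 9]; [:: 1; 2; 3; 4; 6; 7]; [:: 1; 2; 3; 4; 8; 11]; [:: 1; 2; 3; 5; 6; 8]; [:: 1; 2; 3; 5; 10; 11]; [:: 1; 2; 3; 6; 9; 10]; [:: 1; 2; 3; 7;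 8; 10]; [:: 1; 2; 3; 7; 9; 11]; [:: 1; 2; 4; 5; 7; 11]; [:: 1; 2; 4; 5; 8; 10]; [:: 1; 2; 4; 6; 8; 9]; [:: 1; 2; 4; 6; 10; 11]; [:: 1; 2; 4; 7; 9; 10]; [:: 1; 2; 5; 6; 7; 10]; [:: 1; 2; 5; 6; 9; 11]; [:: 1; 2; 5; 7; 8; 9]; [:: 1; 2; 6; 7; 8; 11]; [:: 1; 2; 8; 9; 10; 11]; [:: 1; 3; 4; 5; 6; 10]; [:: 1; 3; 4; 5; 7; 8]; [:: 1; 3; 4; 6; 9; 11]; [:: 1; 3; 4; 7; 10; 11]; [:: 1; 3; 4; 8; 9; 10]; [:: 1; 3; 5; 6; 7; 11]; [:: 1; 3; 5; 7; 9; 10]; [:: 1; 3; 5; 8; 9; 11]; [:: 1; 3; 6; 7; 8; 9]; [:: 1; 3; 6; 8; 10; 11]; [:: 1; 4; 5; 6; 7; 9]; [:: 1; 4; 5; 6; 8; 11]; [:: 1; 4; 5; 9; 10; 11]; [:: 1; 4; 6; 7; 8; 10]; [:: 1; 4; 7; 8; 9; 11]; [:: 1; 5; 6; 8; 9; 10]; [:: 1; 5; 7; 8; 10; 11]; [:: 1; 6; 7; 9; 10; 11]; [:: 2; 3; 4; 5; 6; 11]; [:: 2; 3; 4; 5; 7; 10]; [:: 2; 3; 4; 6; 8; 10]; [:: 2; 3; 4; 7; 8; 9]; [:: 2; 3; 4; 9; 10; 11]; [:: 2; 3; 5; 6; 7; 9]; [:: 2; 3; 5; 7; 8; 11]; [::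 2; 3; 5; 8; 9; 10]; [:: 2; 3; 6; 7; 10; 11]; [:: 2; 3; 6; 8; 9; 11]; [:: 2; 4; 5; 6; 7; 8]; [:: 2; 4; 5; 6; 9; 10]; [:: 2; 4; 5; 8; 9; 11]; [:: 2; 4; 6; 7; 9; 11]; [:: 2; 4; 7; 8; 10; 11]; [:: 2; 5; 6; 8; 10; 11]; [:: 2; 5; 7; 9; 10; 11]; [:: 2; 6; 7; 8; 9; 10]; [:: 3; 4; 5; 6; 8; 9]; [:: 3; 4; 5; 7; 9; 11]; [:: 3; 4; 5; 8; 10; 11]; [:: 3; 4; 6; 7; 8; 11]; [:: 3; 4; 6; 7; 9; 10]; [:: 3; 5; 6; 7; 8; 10]; [:: 3; 5; 6; 9; 10; 11]; [:: 3; 7; 8; 9; 10; 11]; [:: 4; 5; 6; 7; 10; 11]; [:: 4; 5; 7; 8; 9; 10]; [:: 4; 6; 8; 9; 10; 11]; [:: 5; 6; 7; 8; 9; 11]];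
  [:: [:: 0; 1; 2; 3; 4; 5]; [:: 0; 1; 2; 3; 6; 10]; [:: 0; 1; 2; 3; 7; 9]; [:: 0; 1; 2; 3; 8; 11]; [:: 0; 1; 2; 4; 6; 9]; [:: 0; 1; 2; 4; 7; 8]; [:: 0; 1; 2; 4; 10; 11]; [:: 0; 1; 2; 5; 6; 8]; [:: 0; 1; 2; 5; 7; 10]; [:: 0; 1; 2; 5; 9; 11]; [:: 0; 1; 2; 6; 7; 11]; [:: 0; 1; 2; 8; 9; 10]; [:: 0; 1; 3; 4; 6; 7]; [:: 0; 1; 3; 4; 8; 10]; [:: 0; 1; 3; 4; 9; 11]; [:: 0; 1; 3; 5; 6; 11]; [:: 0; 1; 3; 5; 7; 8]; [:: 0; 1; 3; 5; 9; 10]; [:: 0; 1; 3; 6; 8; 9]; [:: 0; 1; 3; 7; 10; 11]; [:: 0; 1; 4; 5; 6; 10]; [:: 0; 1; 4; 5; 7; 11]; [:: 0; 1; 4; 5; 8; 9]; [:: 0; 1; 4; 6; 8; 11]; [:: 0; 1; 4; 7; 9; 10]; [:: 0; 1; 5; 6; 7; 9]; [:: 0; 1; 5; 8; 10; 11]; [:: 0; 1; 6; 7; 8; 10]; [:: 0; 1; 6; 9; 10; 11]; [:: 0; 1; 7; 8; 9; 11]; [:: 0; 2; 3; 4; 6; 11]; [:: 0; 2; 3; 4; 7; 10]; [:: 0; 2; 3; 4; 8; 9]; [:: 0; 2; 3; 5; 6; 9]; [:: 0; 2; 3; 5; 7; 11]; [:: 0; 2; 3; 5; 8; 10]; [:: 0;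 2; 3; 6; 7; 8]; [:: 0; 2; 3; 9; 10; 11]; [:: 0; 2; 4; 5; 6; 7]; [:: 0; 2; 4; 5; 8; 11]; [:: 0; 2; 4; 5; 9; 10]; [:: 0; 2; 4; 6; 8; 10]; [:: 0; 2; 4; 7; 9; 11]; [:: 0; 2; 5; 6; 10; 11]; [:: 0; 2; 5; 7; 8; 9]; [:: 0; 2; 6; 7; 9; 10]; [:: 0; 2; 6; 8; 9; 11]; [:: 0; 2; 7; 8; 10; 11]; [:: 0; 3; 4; 5; 6; 8]; [:: 0; 3; 4; 5; 7; 9]; [:: 0; 3; 4; 5; 10; 11]; [:: 0; 3; 4; 6; 9; 10]; [:: 0; 3; 4; 7; 8; 11]; [:: 0; 3; 5; 6; 7; 10]; [:: 0; 3; 5; 8; 9; 11]; [:: 0; 3; 6; 7; 9; 11]; [:: 0; 3; 6; 8; 10; 11]; [:: 0; 3; 7; 8; 9; 10]; [:: 0; 4; 5; 6; 9; 11]; [:: 0; 4; 5; 7; 8; 10]; [:: 0; 4; 6; 7; 8; 9]; [:: 0; 4; 6; 7; 10; 11]; [:: 0; 4; 8; 9; 10; 11]; [:: 0; 5; 6; 7; 8; 11]; [:: 0; 5; 6; 8; 9; 10]; [:: 0; 5; 7; 9; 10; 11]; [:: 1; 2; 3; 4; 6; 8]; [:: 1; 2; 3; 4; 7; 11]; [:: 1; 2; 3; 4; 9; 10]; [:: 1; 2; 3; 5; 6; 7]; [:: 1; 2; 3; 5; 8; 9]; [:: 1; 2; 3; 5; 10; 11]; [:: 1; 2; 3; 6;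 9; 11]; [:: 1; 2; 3; 7; 8; 10]; [:: 1; 2; 4; 5; 6; 11]; [:: 1; 2; 4; 5; 7; 9]; [:: 1; 2; 4; 5; 8; 10]; [:: 1; 2; 4; 6; 7; 10]; [:: 1; 2; 4; 8; 9; 11]; [:: 1; 2; 5; 6; 9; 10]; [:: 1; 2; 5; 7; 8; 11]; [:: 1; 2; 6; 7; 8; 9]; [:: 1; 2; 6; 8; 10; 11]; [:: 1; 2; 7; 9; 10; 11]; [:: 1; 3; 4; 5; 6; 9]; [:: 1; 3; 4; 5; 7; 10]; [:: 1; 3; 4; 5; 8; 11]; [:: 1; 3; 4; 6; 10; 11]; [:: 1; 3; 4; 7; 8; 9]; [:: 1; 3; 5; 6; 8; 10]; [:: 1; 3; 5; 7; 9; 11]; [:: 1; 3; 6; 7; 8; 11]; [:: 1; 3; 6; 7; 9; 10]; [:: 1; 3; 8; 9; 10; 11]; [:: 1; 4; 5; 6; 7; 8]; [:: 1; 4; 5; 9; 10; 11]; [:: 1; 4; 6; 7; 9; 11]; [:: 1; 4; 6; 8; 9; 10]; [:: 1; 4; 7; 8; 10; 11]; [:: 1; 5; 6; 7; 10; 11]; [:: 1; 5; 6; 8; 9; 11]; [:: 1; 5; 7; 8; 9; 10]; [:: 2; 3; 4; 5; 6; 10]; [:: 2; 3; 4; 5; 7; 8]; [:: 2; 3; 4; 5; 9; 11]; [:: 2; 3; 4; 6; 7; 9]; [:: 2; 3; 4; 8; 10; 11]; [:: 2; 3; 5; 6; 8; 11]; [:: 2; 3; 5; 7; 9; 10]; [::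 2; 3; 6; 7; 10; 11]; [:: 2; 3; 6; 8; 9; 10]; [:: 2; 3; 7; 8; 9; 11]; [:: 2; 4; 5; 6; 8; 9]; [:: 2; 4; 5; 7; 10; 11]; [:: 2; 4; 6; 7; 8; 11]; [:: 2; 4; 6; 9; 10; 11]; [:: 2; 4; 7; 8; 9; 10]; [:: 2; 5; 6; 7; 8; 10]; [:: 2; 5; 6; 7; 9; 11]; [:: 2; 5; 8; 9; 10; 11]; [:: 3; 4; 5; 6; 7; 11]; [:: 3; 4; 5; 8; 9; 10]; [:: 3; 4; 6; 7; 8; 10]; [:: 3; 4; 6; 8; 9; 11]; [:: 3; 4; 7; 9; 10; 11]; [:: 3; 5; 6; 7; 8; 9]; [:: 3; 5; 6; 9; 10; 11]; [:: 3; 5; 7; 8; 10; 11]; [:: 4; 5; 6; 7; 9; 10]; [:: 4; 5; 6; 8; 10; 11]; [:: 4; 5; 7; 8; 9; 11]; [:: 6; 7; 8; 9; 10; 11]];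
  [:: [:: 0; 1; 2; 3; 4; 9]; [:: 0; 1; 2; 3; 5; 11]; [:: 0; 1; 2; 3; 6; 7]; [:: 0; 1; 2; 3; 8; 10]; [:: 0; 1; 2; 4; 5; 7]; [:: 0; 1; 2; 4; 6; 8]; [:: 0; 1; 2; 4; 10; 11]; [:: 0; 1; 2; 5; 6; 10]; [:: 0; 1; 2; 5; 8; 9]; [:: 0; 1; 2; 6; 9; 11]; [:: 0; 1; 2; 7; 8; 11]; [:: 0; 1; 2; 7; 9; 10]; [:: 0; 1; 3; 4; 5; 8]; [:: 0; 1; 3; 4; 6; 10]; [:: 0; 1; 3; 4; 7; 11]; [:: 0; 1; 3; 5; 6; 9]; [:: 0; 1; 3; 5; 7; 10]; [:: 0; 1; 3; 6; 8; 11]; [:: 0; 1; 3; 7; 8; 9]; [:: 0; 1; 3; 9; 10; 11]; [:: 0; 1; 4; 5; 6; 11]; [:: 0; 1; 4; 5; 9; 10]; [:: 0; 1; 4; 6; 7; 9]; [:: 0; 1; 4; 7; 8; 10]; [:: 0; 1; 4; 8; 9; 11]; [:: 0; 1; 5; 6; 7; 8]; [:: 0; 1; 5; 7; 9; 11]; [:: 0; 1; 5; 8; 10; 11]; [:: 0; 1; 6; 7; 10; 11]; [:: 0; 1; 6; 8; 9; 10]; [:: 0; 2; 3; 4; 5; 6]; [:: 0; 2; 3; 4; 7; 10]; [:: 0; 2; 3; 4; 8; 11]; [:: 0; 2; 3; 5; 7; 8]; [:: 0; 2; 3; 5; 9; 10]; [:: 0; 2; 3; 6; 8; 9]; [:: 0;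 2; 3; 6; 10; 11]; [:: 0; 2; 3; 7; 9; 11]; [:: 0; 2; 4; 5; 8; 10]; [:: 0; 2; 4; 5; 9; 11]; [:: 0; 2; 4; 6; 7; 11]; [:: 0; 2; 4; 6; 9; 10]; [:: 0; 2; 4; 7; 8; 9]; [:: 0; 2; 5; 6; 7; 9]; [:: 0; 2; 5; 6; 8; 11]; [:: 0; 2; 5; 7; 10; 11]; [:: 0; 2; 6; 7; 8; 10]; [:: 0; 2; 8; 9; 10; 11]; [:: 0; 3; 4; 5; 7; 9]; [:: 0; 3; 4; 5; 10; 11]; [:: 0; 3; 4; 6; 7; 8]; [:: 0; 3; 4; 6; 9; 11]; [:: 0; 3; 4; 8; 9; 10]; [:: 0; 3; 5; 6; 7; 11]; [:: 0; 3; 5; 6; 8; 10]; [:: 0; 3; 5; 8; 9; 11]; [:: 0; 3; 6; 7; 9; 10]; [:: 0; 3; 7; 8; 10; 11]; [:: 0; 4; 5; 6; 7; 10]; [:: 0; 4; 5; 6; 8; 9]; [:: 0; 4; 5; 7; 8; 11]; [:: 0; 4; 6; 8; 10; 11]; [:: 0; 4; 7; 9; 10; 11]; [:: 0; 5; 6; 9; 10; 11]; [:: 0; 5; 7; 8; 9; 10]; [:: 0; 6; 7; 8; 9; 11]; [:: 1; 2; 3; 4; 5; 10]; [:: 1; 2; 3; 4; 6; 11]; [:: 1; 2; 3; 4; 7; 8]; [:: 1; 2; 3; 5; 6; 8]; [:: 1; 2; 3; 5; 7; 9]; [:: 1; 2; 3; 6; 9; 10]; [:: 1; 2; 3; 7;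 10; 11]; [:: 1; 2; 3; 8; 9; 11]; [:: 1; 2; 4; 5; 6; 9]; [:: 1; 2; 4; 5; 8; 11]; [:: 1; 2; 4; 6; 7; 10]; [:: 1; 2; 4; 7; 9; 11]; [:: 1; 2; 4; 8; 9; 10]; [:: 1; 2; 5; 6; 7; 11]; [:: 1; 2; 5; 7; 8; 10]; [:: 1; 2; 5; 9; 10; 11]; [:: 1; 2; 6; 7; 8; 9]; [:: 1; 2; 6; 8; 10; 11]; [:: 1; 3; 4; 5; 6; 7]; [:: 1; 3; 4; 5; 9; 11]; [:: 1; 3; 4; 6; 8; 9]; [:: 1; 3; 4; 7; 9; 10]; [:: 1; 3; 4; 8; 10; 11]; [:: 1; 3; 5; 6; 10; 11]; [:: 1; 3; 5; 7; 8; 11]; [:: 1; 3; 5; 8; 9; 10]; [:: 1; 3; 6; 7; 8; 10]; [:: 1; 3; 6; 7; 9; 11]; [:: 1; 4; 5; 6; 8; 10]; [:: 1; 4; 5; 7; 8; 9]; [:: 1; 4; 5; 7; 10; 11]; [:: 1; 4; 6; 7; 8; 11]; [:: 1; 4; 6; 9; 10; 11]; [:: 1; 5; 6; 7; 9; 10]; [:: 1; 5; 6; 8; 9; 11]; [:: 1; 7; 8; 9; 10; 11]; [:: 2; 3; 4; 5; 7; 11]; [:: 2; 3; 4; 5; 8; 9]; [:: 2; 3; 4; 6; 7; 9]; [:: 2; 3; 4; 6; 8; 10]; [:: 2; 3; 4; 9; 10; 11]; [:: 2; 3; 5; 6; 7; 10]; [:: 2; 3; 5; 6; 9; 11]; [::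 2; 3; 5; 8; 10; 11]; [:: 2; 3; 6; 7; 8; 11]; [:: 2; 3; 7; 8; 9; 10]; [:: 2; 4; 5; 6; 7; 8]; [:: 2; 4; 5; 6; 10; 11]; [:: 2; 4; 5; 7; 9; 10]; [:: 2; 4; 6; 8; 9; 11]; [:: 2; 4; 7; 8; 10; 11]; [:: 2; 5; 6; 8; 9; 10]; [:: 2; 5; 7; 8; 9; 11]; [:: 2; 6; 7; 9; 10; 11]; [:: 3; 4; 5; 6; 8; 11]; [:: 3; 4; 5; 6; 9; 10]; [:: 3; 4; 5; 7; 8; 10]; [:: 3; 4; 6; 7; 10; 11]; [:: 3; 4; 7; 8; 9; 11]; [:: 3; 5; 6; 7; 8; 9]; [:: 3; 5; 7; 9; 10; 11]; [:: 3; 6; 8; 9; 10; 11]; [:: 4; 5; 6; 7; 9; 11]; [:: 4; 5; 8; 9; 10; 11]; [:: 4; 6; 7; 8; 9; 10]; [:: 5; 6; 7; 8; 10; 11]]].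
Definition D11 : seq (seq (seq nat)) := [::
  [:: [:: 0; 1; 2; 3; 9]; [:: 0; 1; 2; 4; 7]; [:: 0; 1; 2; 5; 6]; [:: 0; 1; 2; 8; 10]; [:: 0; 1; 3; 4; 8]; [:: 0; 1; 3; 5; 7]; [:: 0; 1; 3; 6; 10]; [:: 0; 1; 4; 5; 10]; [:: 0; 1; 4; 6; 9]; [:: 0; 1; 5; 8; 9]; [:: 0; 1; 6; 7; 8]; [:: 0; 1; 7; 9; 10]; [:: 0; 2; 3; 4; 5]; [:: 0; 2; 3; 6; 8]; [:: 0; 2; 3; 7; 10]; [:: 0; 2; 4; 6; 10]; [:: 0; 2; 4; 8; 9]; [:: 0; 2; 5; 7; 8]; [:: 0; 2; 5; 9; 10]; [:: 0; 2; 6; 7; 9]; [:: 0; 3; 4; 6; 7]; [:: 0; 3; 4; 9; 10]; [:: 0; 3; 5; 6; 9]; [:: 0; 3; 5; 8; 10]; [:: 0; 3; 7; 8; 9]; [:: 0; 4; 5; 6; 8]; [:: 0; 4; 5; 7; 9]; [:: 0; 4; 7; 8; 10]; [:: 0; 5; 6; 7; 10]; [:: 0; 6; 8; 9; 10]; [:: 1; 2; 3; 4; 10]; [:: 1; 2; 3; 5; 8]; [:: 1; 2; 3; 6; 7]; [:: 1; 2; 4; 5; 9]; [:: 1; 2; 4; 6; 8]; [:: 1; 2; 5; 7; 10]; [:: 1; 2; 6; 9; 10]; [:: 1; 2; 7; 8; 9]; [:: 1; 3; 4; 5; 6]; [:: 1; 3; 4; 7; 9]; [:: 1; 3; 5;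 9; 10]; [:: 1; 3; 6; 8; 9]; [:: 1; 3; 7; 8; 10]; [:: 1; 4; 5; 7; 8]; [:: 1; 4; 6; 7; 10]; [:: 1; 4; 8; 9; 10]; [:: 1; 5; 6; 7; 9]; [:: 1; 5; 6; 8; 10]; [:: 2; 3; 4; 6; 9]; [:: 2; 3; 4; 7; 8]; [:: 2; 3; 5; 6; 10]; [:: 2; 3; 5; 7; 9]; [:: 2; 3; 8; 9; 10]; [:: 2; 4; 5; 6; 7]; [:: 2; 4; 5; 8; 10]; [:: 2; 4; 7; 9; 10]; [:: 2; 5; 6; 8; 9]; [:: 2; 6; 7; 8; 10]; [:: 3; 4; 5; 7; 10]; [:: 3; 4; 5; 8; 9]; [:: 3; 4; 6; 8; 10]; [:: 3; 5; 6; 7; 8]; [:: 3; 6; 7; 9; 10]; [:: 4; 5; 6; 9; 10]; [:: 4; 6; 7; 8; 9]; [:: 5; 7; 8; 9; 10]];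
  [:: [:: 0; 1; 2; 3; 9]; [:: 0; 1; 2; 4; 7]; [:: 0; 1; 2; 5; 6]; [:: 0; 1; 2; 8; 10]; [:: 0; 1; 3; 4; 8]; [:: 0; 1; 3; 5; 7]; [:: 0; 1; 3; 6; 10]; [:: 0; 1; 4; 5; 10]; [:: 0; 1; 4; 6; 9]; [:: 0; 1; 5; 8; 9]; [:: 0; 1; 6; 7; 8]; [:: 0; 1; 7; 9; 10]; [:: 0; 2; 3; 4; 5]; [:: 0; 2; 3; 6; 8]; [:: 0; 2; 3; 7; 10]; [:: 0; 2; 4; 6; 10]; [:: 0; 2; 4; 8; 9]; [:: 0; 2; 5; 7; 8]; [:: 0; 2; 5; 9; 10]; [:: 0; 2; 6; 7; 9]; [:: 0; 3; 4; 6; 7]; [:: 0; 3; 4; 9; 10]; [:: 0; 3; 5; 6; 9]; [:: 0; 3; 5; 8; 10]; [:: 0; 3; 7; 8; 9]; [:: 0; 4; 5; 6; 8]; [:: 0; 4; 5; 7; 9]; [:: 0; 4; 7; 8; 10]; [:: 0; 5; 6; 7; 10]; [:: 0; 6; 8; 9; 10]; [:: 1; 2; 3; 4; 10]; [:: 1; 2; 3; 5; 8]; [:: 1; 2; 3; 6; 7]; [:: 1; 2; 4; 5; 9]; [:: 1; 2; 4; 6; 8]; [:: 1; 2; 5; 7; 10]; [:: 1; 2; 6; 9; 10]; [:: 1; 2; 7; 8; 9]; [:: 1; 3; 4; 5; 6]; [:: 1; 3; 4; 7; 9]; [:: 1; 3; 5; 9; 10]; [:: 1; 3; 6; 8; 9];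 [:: 1; 3; 7; 8; 10]; [:: 1; 4; 5; 7; 8]; [:: 1; 4; 6; 7; 10]; [:: 1; 4; 8; 9; 10]; [:: 1; 5; 6; 7; 9]; [:: 1; 5; 6; 8; 10]; [:: 2; 3; 4; 6; 9]; [:: 2; 3; 4; 7; 8]; [:: 2; 3; 5; 6; 10]; [:: 2; 3; 5; 7; 9]; [:: 2; 3; 8; 9; 10]; [:: 2; 4; 5; 6; 7]; [:: 2; 4; 5; 8; 10]; [:: 2; 4; 7; 9; 10]; [:: 2; 5; 6; 8; 9]; [:: 2; 6; 7; 8; 10]; [:: 3; 4; 5; 7; 10]; [:: 3; 4; 5; 8; 9]; [:: 3; 4; 6; 8; 10]; [:: 3; 5; 6; 7; 8]; [:: 3; 6; 7; 9; 10]; [:: 4; 5; 6; 9; 10]; [:: 4; 6; 7; 8; 9]; [:: 5; 7; 8; 9; 10]];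
  [:: [:: 0; 1; 2; 3; 7]; [:: 0; 1; 2; 4; 9]; [:: 0; 1; 2; 5; 10]; [:: 0; 1; 2; 6; 8]; [:: 0; 1; 3; 4; 6]; [:: 0; 1; 3; 5; 9]; [:: 0; 1; 3; 8; 10]; [:: 0; 1; 4; 5; 8]; [:: 0; 1; 4; 7; 10]; [:: 0; 1; 5; 6; 7]; [:: 0; 1; 6; 9; 10]; [:: 0; 1; 7; 8; 9]; [:: 0; 2; 3; 4; 10]; [:: 0; 2; 3; 5; 8]; [:: 0; 2; 3; 6; 9]; [:: 0; 2; 4; 5; 6]; [:: 0; 2; 4; 7; 8]; [:: 0; 2; 5; 7; 9]; [:: 0; 2; 6; 7; 10]; [:: 0; 2; 8; 9; 10]; [:: 0; 3; 4; 5; 7]; [:: 0; 3; 4; 8; 9]; [:: 0; 3; 5; 6; 10]; [:: 0; 3; 6; 7; 8]; [:: 0; 3; 7; 9; 10]; [:: 0; 4; 5; 9; 10]; [:: 0; 4; 6; 7; 9]; [:: 0; 4; 6; 8; 10]; [:: 0; 5; 6; 8; 9]; [:: 0; 5; 7; 8; 10]; [:: 1; 2; 3; 4; 5]; [:: 1; 2; 3; 6; 10]; [:: 1; 2; 3; 8; 9]; [:: 1; 2; 4; 6; 7]; [:: 1; 2; 4; 8; 10]; [:: 1; 2; 5; 6; 9]; [:: 1; 2; 5; 7; 8]; [:: 1; 2; 7; 9; 10]; [:: 1; 3; 4; 7; 8]; [:: 1; 3; 4; 9; 10]; [:: 1; 3; 5; 6; 8]; [:: 1; 3; 5; 7; 10];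 [:: 1; 3; 6; 7; 9]; [:: 1; 4; 5; 6; 10]; [:: 1; 4; 5; 7; 9]; [:: 1; 4; 6; 8; 9]; [:: 1; 5; 8; 9; 10]; [:: 1; 6; 7; 8; 10]; [:: 2; 3; 4; 6; 8]; [:: 2; 3; 4; 7; 9]; [:: 2; 3; 5; 6; 7]; [:: 2; 3; 5; 9; 10]; [:: 2; 3; 7; 8; 10]; [:: 2; 4; 5; 7; 10]; [:: 2; 4; 5; 8; 9]; [:: 2; 4; 6; 9; 10]; [:: 2; 5; 6; 8; 10]; [:: 2; 6; 7; 8; 9]; [:: 3; 4; 5; 6; 9]; [:: 3; 4; 5; 8; 10]; [:: 3; 4; 6; 7; 10]; [:: 3; 5; 7; 8; 9]; [:: 3; 6; 8; 9; 10]; [:: 4; 5; 6; 7; 8]; [:: 4; 7; 8; 9; 10]; [:: 5; 6; 7; 9; 10]];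
  [:: [:: 0; 1; 2; 3; 4]; [:: 0; 1; 2; 5; 10]; [:: 0; 1; 2; 6; 8]; [:: 0; 1; 2; 7; 9]; [:: 0; 1; 3; 5; 8]; [:: 0; 1; 3; 6; 9]; [:: 0; 1; 3; 7; 10]; [:: 0; 1; 4; 5; 9]; [:: 0; 1; 4; 6; 10]; [:: 0; 1; 4; 7; 8]; [:: 0; 1; 5; 6; 7]; [:: 0; 1; 8; 9; 10]; [:: 0; 2; 3; 5; 7]; [:: 0; 2; 3; 6; 10]; [:: 0; 2; 3; 8; 9]; [:: 0; 2; 4; 5; 8]; [:: 0; 2; 4; 6; 7]; [:: 0; 2; 4; 9; 10]; [:: 0; 2; 5; 6; 9]; [:: 0; 2; 7; 8; 10]; [:: 0; 3; 4; 5; 6]; [:: 0; 3; 4; 7; 9]; [:: 0; 3; 4; 8; 10]; [:: 0; 3; 5; 9; 10]; [:: 0; 3; 6; 7; 8]; [:: 0; 4; 5; 7; 10]; [:: 0; 4; 6; 8; 9]; [:: 0; 5; 6; 8; 10]; [:: 0; 5; 7; 8; 9]; [:: 0; 6; 7; 9; 10]; [:: 1; 2; 3; 5; 6]; [:: 1; 2; 3; 7; 8]; [:: 1; 2; 3; 9; 10]; [:: 1; 2; 4; 5; 7]; [:: 1; 2; 4; 6; 9]; [:: 1; 2; 4; 8; 10]; [:: 1; 2; 5; 8; 9]; [:: 1; 2; 6; 7; 10]; [:: 1; 3; 4; 5; 10]; [:: 1; 3; 4; 6; 7]; [:: 1; 3; 4; 8; 9]; [:: 1; 3; 5; 7; 9];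 [:: 1; 3; 6; 8; 10]; [:: 1; 4; 5; 6; 8]; [:: 1; 4; 7; 9; 10]; [:: 1; 5; 6; 9; 10]; [:: 1; 5; 7; 8; 10]; [:: 1; 6; 7; 8; 9]; [:: 2; 3; 4; 5; 9]; [:: 2; 3; 4; 6; 8]; [:: 2; 3; 4; 7; 10]; [:: 2; 3; 5; 8; 10]; [:: 2; 3; 6; 7; 9]; [:: 2; 4; 5; 6; 10]; [:: 2; 4; 7; 8; 9]; [:: 2; 5; 6; 7; 8]; [:: 2; 5; 7; 9; 10]; [:: 2; 6; 8; 9; 10]; [:: 3; 4; 5; 7; 8]; [:: 3; 4; 6; 9; 10]; [:: 3; 5; 6; 7; 10]; [:: 3; 5; 6; 8; 9]; [:: 3; 7; 8; 9; 10]; [:: 4; 5; 6; 7; 9]; [:: 4; 5; 8; 9; 10]; [:: 4; 6; 7; 8; 10]];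
  [:: [:: 0; 1; 2; 3; 5]; [:: 0; 1; 2; 4; 8]; [:: 0; 1; 2; 6; 9]; [:: 0; 1; 2; 7; 10]; [:: 0; 1; 3; 4; 10]; [:: 0; 1; 3; 6; 7]; [:: 0; 1; 3; 8; 9]; [:: 0; 1; 4; 5; 6]; [:: 0; 1; 4; 7; 9]; [:: 0; 1; 5; 7; 8]; [:: 0; 1; 5; 9; 10]; [:: 0; 1; 6; 8; 10]; [:: 0; 2; 3; 4; 6]; [:: 0; 2; 3; 7; 9]; [:: 0; 2; 3; 8; 10]; [:: 0; 2; 4; 5; 7]; [:: 0; 2; 4; 9; 10]; [:: 0; 2; 5; 6; 10]; [:: 0; 2; 5; 8; 9]; [:: 0; 2; 6; 7; 8]; [:: 0; 3; 4; 5; 9]; [:: 0; 3; 4; 7; 8]; [:: 0; 3; 5; 6; 8]; [:: 0; 3; 5; 7; 10]; [:: 0; 3; 6; 9; 10]; [:: 0; 4; 5; 8; 10]; [:: 0; 4; 6; 7; 10]; [:: 0; 4; 6; 8; 9]; [:: 0; 5; 6; 7; 9]; [:: 0; 7; 8; 9; 10]; [:: 1; 2; 3; 4; 9]; [:: 1; 2; 3; 6; 10]; [:: 1; 2; 3; 7; 8]; [:: 1; 2; 4; 5; 10]; [:: 1; 2; 4; 6; 7]; [:: 1; 2; 5; 6; 8]; [:: 1; 2; 5; 7; 9]; [:: 1; 2; 8; 9; 10]; [:: 1; 3; 4; 5; 7]; [:: 1; 3; 4; 6; 8]; [:: 1; 3; 5; 6; 9]; [:: 1; 3; 5; 8; 10];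 [:: 1; 3; 7; 9; 10]; [:: 1; 4; 5; 8; 9]; [:: 1; 4; 6; 9; 10]; [:: 1; 4; 7; 8; 10]; [:: 1; 5; 6; 7; 10]; [:: 1; 6; 7; 8; 9]; [:: 2; 3; 4; 5; 8]; [:: 2; 3; 4; 7; 10]; [:: 2; 3; 5; 6; 7]; [:: 2; 3; 5; 9; 10]; [:: 2; 3; 6; 8; 9]; [:: 2; 4; 5; 6; 9]; [:: 2; 4; 6; 8; 10]; [:: 2; 4; 7; 8; 9]; [:: 2; 5; 7; 8; 10]; [:: 2; 6; 7; 9; 10]; [:: 3; 4; 5; 6; 10]; [:: 3; 4; 6; 7; 9]; [:: 3; 4; 8; 9; 10]; [:: 3; 5; 7; 8; 9]; [:: 3; 6; 7; 8; 10]; [:: 4; 5; 6; 7; 8]; [:: 4; 5; 7; 9; 10]; [:: 5; 6; 8; 9; 10]];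
  [:: [:: 0; 1; 2; 3; 7]; [:: 0; 1; 2; 4; 6]; [:: 0; 1; 2; 5; 8]; [:: 0; 1; 2; 9; 10]; [:: 0; 1; 3; 4; 10]; [:: 0; 1; 3; 5; 9]; [:: 0; 1; 3; 6; 8]; [:: 0; 1; 4; 5; 7]; [:: 0; 1; 4; 8; 9]; [:: 0; 1; 5; 6; 10]; [:: 0; 1; 6; 7; 9]; [:: 0; 1; 7; 8; 10]; [:: 0; 2; 3; 4; 8]; [:: 0; 2; 3; 5; 10]; [:: 0; 2; 3; 6; 9]; [:: 0; 2; 4; 5; 9]; [:: 0; 2; 4; 7; 10]; [:: 0; 2; 5; 6; 7]; [:: 0; 2; 6; 8; 10]; [:: 0; 2; 7; 8; 9]; [:: 0; 3; 4; 5; 6]; [:: 0; 3; 4; 7; 9]; [:: 0; 3; 5; 7; 8]; [:: 0; 3; 6; 7; 10]; [:: 0; 3; 8; 9; 10]; [:: 0; 4; 5; 8; 10]; [:: 0; 4; 6; 7; 8]; [:: 0; 4; 6; 9; 10]; [:: 0; 5; 6; 8; 9]; [:: 0; 5; 7; 9; 10]; [:: 1; 2; 3; 4; 9]; [:: 1; 2; 3; 5; 6]; [:: 1; 2; 3; 8; 10]; [:: 1; 2; 4; 5; 10]; [:: 1; 2; 4; 7; 8]; [:: 1; 2; 5; 7; 9]; [:: 1; 2; 6; 7; 10]; [:: 1; 2; 6; 8; 9]; [:: 1; 3; 4; 5; 8]; [:: 1; 3; 4; 6; 7]; [:: 1; 3; 5; 7; 10]; [:: 1; 3; 6; 9; 10];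 [:: 1; 3; 7; 8; 9]; [:: 1; 4; 5; 6; 9]; [:: 1; 4; 6; 8; 10]; [:: 1; 4; 7; 9; 10]; [:: 1; 5; 6; 7; 8]; [:: 1; 5; 8; 9; 10]; [:: 2; 3; 4; 5; 7]; [:: 2; 3; 4; 6; 10]; [:: 2; 3; 5; 8; 9]; [:: 2; 3; 6; 7; 8]; [:: 2; 3; 7; 9; 10]; [:: 2; 4; 5; 6; 8]; [:: 2; 4; 6; 7; 9]; [:: 2; 4; 8; 9; 10]; [:: 2; 5; 6; 9; 10]; [:: 2; 5; 7; 8; 10]; [:: 3; 4; 5; 9; 10]; [:: 3; 4; 6; 8; 9]; [:: 3; 4; 7; 8; 10]; [:: 3; 5; 6; 7; 9]; [:: 3; 5; 6; 8; 10]; [:: 4; 5; 6; 7; 10]; [:: 4; 5; 7; 8; 9]; [:: 6; 7; 8; 9; 10]];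
  [:: [:: 0; 1; 2; 3; 4]; [:: 0; 1; 2; 5; 9]; [:: 0; 1; 2; 6; 10]; [:: 0; 1; 2; 7; 8]; [:: 0; 1; 3; 5; 6]; [:: 0; 1; 3; 7; 9]; [:: 0; 1; 3; 8; 10]; [:: 0; 1; 4; 5; 8]; [:: 0; 1; 4; 6; 7]; [:: 0; 1; 4; 9; 10]; [:: 0; 1; 5; 7; 10]; [:: 0; 1; 6; 8; 9]; [:: 0; 2; 3; 5; 10]; [:: 0; 2; 3; 6; 7]; [:: 0; 2; 3; 8; 9]; [:: 0; 2; 4; 5; 7]; [:: 0; 2; 4; 6; 9]; [:: 0; 2; 4; 8; 10]; [:: 0; 2; 5; 6; 8]; [:: 0; 2; 7; 9; 10]; [:: 0; 3; 4; 5; 9]; [:: 0; 3; 4; 6; 8]; [:: 0; 3; 4; 7; 10]; [:: 0; 3; 5; 7; 8]; [:: 0; 3; 6; 9; 10]; [:: 0; 4; 5; 6; 10]; [:: 0; 4; 7; 8; 9]; [:: 0; 5; 6; 7; 9]; [:: 0; 5; 8; 9; 10]; [:: 0; 6; 7; 8; 10]; [:: 1; 2; 3; 5; 7]; [:: 1; 2; 3; 6; 8]; [:: 1; 2; 3; 9; 10]; [:: 1; 2; 4; 5; 6]; [:: 1; 2; 4; 7; 10]; [:: 1; 2; 4; 8; 9]; [:: 1; 2; 5; 8; 10]; [:: 1; 2; 6; 7; 9]; [:: 1; 3; 4; 5; 10]; [:: 1; 3; 4; 6; 9]; [:: 1; 3; 4; 7; 8]; [:: 1; 3; 5; 8; 9];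 [:: 1; 3; 6; 7; 10]; [:: 1; 4; 5; 7; 9]; [:: 1; 4; 6; 8; 10]; [:: 1; 5; 6; 7; 8]; [:: 1; 5; 6; 9; 10]; [:: 1; 7; 8; 9; 10]; [:: 2; 3; 4; 5; 8]; [:: 2; 3; 4; 6; 10]; [:: 2; 3; 4; 7; 9]; [:: 2; 3; 5; 6; 9]; [:: 2; 3; 7; 8; 10]; [:: 2; 4; 5; 9; 10]; [:: 2; 4; 6; 7; 8]; [:: 2; 5; 6; 7; 10]; [:: 2; 5; 7; 8; 9]; [:: 2; 6; 8; 9; 10]; [:: 3; 4; 5; 6; 7]; [:: 3; 4; 8; 9; 10]; [:: 3; 5; 6; 8; 10]; [:: 3; 5; 7; 9; 10]; [:: 3; 6; 7; 8; 9]; [:: 4; 5; 6; 8; 9]; [:: 4; 5; 7; 8; 10]; [:: 4; 6; 7; 9; 10]];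
  [:: [:: 0; 1; 2; 3; 8]; [:: 0; 1; 2; 4; 5]; [:: 0; 1; 2; 6; 10]; [:: 0; 1; 2; 7; 9]; [:: 0; 1; 3; 4; 9]; [:: 0; 1; 3; 5; 10]; [:: 0; 1; 3; 6; 7]; [:: 0; 1; 4; 6; 8]; [:: 0; 1; 4; 7; 10]; [:: 0; 1; 5; 6; 9]; [:: 0; 1; 5; 7; 8]; [:: 0; 1; 8; 9; 10]; [:: 0; 2; 3; 4; 7]; [:: 0; 2; 3; 5; 6]; [:: 0; 2; 3; 9; 10]; [:: 0; 2; 4; 6; 9]; [:: 0; 2; 4; 8; 10]; [:: 0; 2; 5; 7; 10]; [:: 0; 2; 5; 8; 9]; [:: 0; 2; 6; 7; 8]; [:: 0; 3; 4; 5; 8]; [:: 0; 3; 4; 6; 10]; [:: 0; 3; 5; 7; 9]; [:: 0; 3; 6; 8; 9]; [:: 0; 3; 7; 8; 10]; [:: 0; 4; 5; 6; 7]; [:: 0; 4; 5; 9; 10]; [:: 0; 4; 7; 8; 9]; [:: 0; 5; 6; 8; 10]; [:: 0; 6; 7; 9; 10]; [:: 1; 2; 3; 4; 6]; [:: 1; 2; 3; 5; 9]; [:: 1; 2; 3; 7; 10]; [:: 1; 2; 4; 7; 8]; [:: 1; 2; 4; 9; 10]; [:: 1; 2; 5; 6; 7]; [:: 1; 2; 5; 8; 10]; [:: 1; 2; 6; 8; 9]; [:: 1; 3; 4; 5; 7]; [:: 1; 3; 4; 8; 10]; [:: 1; 3; 5; 6; 8]; [:: 1; 3; 6; 9; 10];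 [:: 1; 3; 7; 8; 9]; [:: 1; 4; 5; 6; 10]; [:: 1; 4; 5; 8; 9]; [:: 1; 4; 6; 7; 9]; [:: 1; 5; 7; 9; 10]; [:: 1; 6; 7; 8; 10]; [:: 2; 3; 4; 5; 10]; [:: 2; 3; 4; 8; 9]; [:: 2; 3; 5; 7; 8]; [:: 2; 3; 6; 7; 9]; [:: 2; 3; 6; 8; 10]; [:: 2; 4; 5; 6; 8]; [:: 2; 4; 5; 7; 9]; [:: 2; 4; 6; 7; 10]; [:: 2; 5; 6; 9; 10]; [:: 2; 7; 8; 9; 10]; [:: 3; 4; 5; 6; 9]; [:: 3; 4; 6; 7; 8]; [:: 3; 4; 7; 9; 10]; [:: 3; 5; 6; 7; 10]; [:: 3; 5; 8; 9; 10]; [:: 4; 5; 7; 8; 10]; [:: 4; 6; 8; 9; 10]; [:: 5; 6; 7; 8; 9]];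
  [:: [:: 0; 1; 2; 3; 6]; [:: 0; 1; 2; 4; 8]; [:: 0; 1; 2; 5; 7]; [:: 0; 1; 2; 9; 10]; [:: 0; 1; 3; 4; 7]; [:: 0; 1; 3; 5; 10]; [:: 0; 1; 3; 8; 9]; [:: 0; 1; 4; 5; 9]; [:: 0; 1; 4; 6; 10]; [:: 0; 1; 5; 6; 8]; [:: 0; 1; 6; 7; 9]; [:: 0; 1; 7; 8; 10]; [:: 0; 2; 3; 4; 10]; [:: 0; 2; 3; 5; 9]; [:: 0; 2; 3; 7; 8]; [:: 0; 2; 4; 5; 6]; [:: 0; 2; 4; 7; 9]; [:: 0; 2; 5; 8; 10]; [:: 0; 2; 6; 7; 10]; [:: 0; 2; 6; 8; 9]; [:: 0; 3; 4; 5; 8]; [:: 0; 3; 4; 6; 9]; [:: 0; 3; 5; 6; 7]; [:: 0; 3; 6; 8; 10]; [:: 0; 3; 7; 9; 10]; [:: 0; 4; 5; 7; 10]; [:: 0; 4; 6; 7; 8]; [:: 0; 4; 8; 9; 10]; [:: 0; 5; 6; 9; 10]; [:: 0; 5; 7; 8; 9]; [:: 1; 2; 3; 4; 5]; [:: 1; 2; 3; 7; 9]; [:: 1; 2; 3; 8; 10]; [:: 1; 2; 4; 6; 9]; [:: 1; 2; 4; 7; 10]; [:: 1; 2; 5; 6; 10]; [:: 1; 2; 5; 8; 9]; [:: 1; 2; 6; 7; 8]; [:: 1; 3; 4; 6; 8]; [:: 1; 3; 4; 9; 10]; [:: 1; 3; 5; 6; 9]; [:: 1; 3; 5; 7; 8];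 [:: 1; 3; 6; 7; 10]; [:: 1; 4; 5; 6; 7]; [:: 1; 4; 5; 8; 10]; [:: 1; 4; 7; 8; 9]; [:: 1; 5; 7; 9; 10]; [:: 1; 6; 8; 9; 10]; [:: 2; 3; 4; 6; 7]; [:: 2; 3; 4; 8; 9]; [:: 2; 3; 5; 6; 8]; [:: 2; 3; 5; 7; 10]; [:: 2; 3; 6; 9; 10]; [:: 2; 4; 5; 7; 8]; [:: 2; 4; 5; 9; 10]; [:: 2; 4; 6; 8; 10]; [:: 2; 5; 6; 7; 9]; [:: 2; 7; 8; 9; 10]; [:: 3; 4; 5; 6; 10]; [:: 3; 4; 5; 7; 9]; [:: 3; 4; 7; 8; 10]; [:: 3; 5; 8; 9; 10]; [:: 3; 6; 7; 8; 9]; [:: 4; 5; 6; 8; 9]; [:: 4; 6; 7; 9; 10]; [:: 5; 6; 7; 8; 10]];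
  [:: [:: 0; 1; 2; 3; 10]; [:: 0; 1; 2; 4; 5]; [:: 0; 1; 2; 6; 7]; [:: 0; 1; 2; 8; 9]; [:: 0; 1; 3; 4; 6]; [:: 0; 1; 3; 5; 8]; [:: 0; 1; 3; 7; 9]; [:: 0; 1; 4; 7; 8]; [:: 0; 1; 4; 9; 10]; [:: 0; 1; 5; 6; 9]; [:: 0; 1; 5; 7; 10]; [:: 0; 1; 6; 8; 10]; [:: 0; 2; 3; 4; 9]; [:: 0; 2; 3; 5; 6]; [:: 0; 2; 3; 7; 8]; [:: 0; 2; 4; 6; 8]; [:: 0; 2; 4; 7; 10]; [:: 0; 2; 5; 7; 9]; [:: 0; 2; 5; 8; 10]; [:: 0; 2; 6; 9; 10]; [:: 0; 3; 4; 5; 7]; [:: 0; 3; 4; 8; 10]; [:: 0; 3; 5; 9; 10]; [:: 0; 3; 6; 7; 10]; [:: 0; 3; 6; 8; 9]; [:: 0; 4; 5; 6; 10]; [:: 0; 4; 5; 8; 9]; [:: 0; 4; 6; 7; 9]; [:: 0; 5; 6; 7; 8]; [:: 0; 7; 8; 9; 10]; [:: 1; 2; 3; 4; 8]; [:: 1; 2; 3; 5; 7]; [:: 1; 2; 3; 6; 9]; [:: 1; 2; 4; 6; 10]; [:: 1; 2; 4; 7; 9]; [:: 1; 2; 5; 6; 8]; [:: 1; 2; 5; 9; 10]; [:: 1; 2; 7; 8; 10]; [:: 1; 3; 4; 5; 9]; [:: 1; 3; 4; 7; 10]; [:: 1; 3; 5; 6; 10]; [:: 1; 3; 6; 7; 8];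 [:: 1; 3; 8; 9; 10]; [:: 1; 4; 5; 6; 7]; [:: 1; 4; 5; 8; 10]; [:: 1; 4; 6; 8; 9]; [:: 1; 5; 7; 8; 9]; [:: 1; 6; 7; 9; 10]; [:: 2; 3; 4; 5; 10]; [:: 2; 3; 4; 6; 7]; [:: 2; 3; 5; 8; 9]; [:: 2; 3; 6; 8; 10]; [:: 2; 3; 7; 9; 10]; [:: 2; 4; 5; 6; 9]; [:: 2; 4; 5; 7; 8]; [:: 2; 4; 8; 9; 10]; [:: 2; 5; 6; 7; 10]; [:: 2; 6; 7; 8; 9]; [:: 3; 4; 5; 6; 8]; [:: 3; 4; 6; 9; 10]; [:: 3; 4; 7; 8; 9]; [:: 3; 5; 6; 7; 9]; [:: 3; 5; 7; 8; 10]; [:: 4; 5; 7; 9; 10]; [:: 4; 6; 7; 8; 10]; [:: 5; 6; 8; 9; 10]];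
  [:: [:: 0; 1; 2; 3; 10]; [:: 0; 1; 2; 4; 6]; [:: 0; 1; 2; 5; 7]; [:: 0; 1; 2; 8; 9]; [:: 0; 1; 3; 4; 5]; [:: 0; 1; 3; 6; 9]; [:: 0; 1; 3; 7; 8]; [:: 0; 1; 4; 7; 9]; [:: 0; 1; 4; 8; 10]; [:: 0; 1; 5; 6; 8]; [:: 0; 1; 5; 9; 10]; [:: 0; 1; 6; 7; 10]; [:: 0; 2; 3; 4; 9]; [:: 0; 2; 3; 5; 8]; [:: 0; 2; 3; 6; 7]; [:: 0; 2; 4; 5; 10]; [:: 0; 2; 4; 7; 8]; [:: 0; 2; 5; 6; 9]; [:: 0; 2; 6; 8; 10]; [:: 0; 2; 7; 9; 10]; [:: 0; 3; 4; 6; 8]; [:: 0; 3; 4; 7; 10]; [:: 0; 3; 5; 6; 10]; [:: 0; 3; 5; 7; 9]; [:: 0; 3; 8; 9; 10]; [:: 0; 4; 5; 6; 7]; [:: 0; 4; 5; 8; 9]; [:: 0; 4; 6; 9; 10]; [:: 0; 5; 7; 8; 10]; [:: 0; 6; 7; 8; 9]; [:: 1; 2; 3; 4; 7]; [:: 1; 2; 3; 5; 9]; [:: 1; 2; 3; 6; 8]; [:: 1; 2; 4; 5; 8]; [:: 1; 2; 4; 9; 10]; [:: 1; 2; 5; 6; 10]; [:: 1; 2; 6; 7; 9]; [:: 1; 2; 7; 8; 10]; [:: 1; 3; 4; 6; 10]; [:: 1; 3; 4; 8; 9]; [:: 1; 3; 5; 6; 7]; [:: 1; 3; 5; 8; 10];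 [:: 1; 3; 7; 9; 10]; [:: 1; 4; 5; 6; 9]; [:: 1; 4; 5; 7; 10]; [:: 1; 4; 6; 7; 8]; [:: 1; 5; 7; 8; 9]; [:: 1; 6; 8; 9; 10]; [:: 2; 3; 4; 5; 6]; [:: 2; 3; 4; 8; 10]; [:: 2; 3; 5; 7; 10]; [:: 2; 3; 6; 9; 10]; [:: 2; 3; 7; 8; 9]; [:: 2; 4; 5; 7; 9]; [:: 2; 4; 6; 7; 10]; [:: 2; 4; 6; 8; 9]; [:: 2; 5; 6; 7; 8]; [:: 2; 5; 8; 9; 10]; [:: 3; 4; 5; 7; 8]; [:: 3; 4; 5; 9; 10]; [:: 3; 4; 6; 7; 9]; [:: 3; 5; 6; 8; 9]; [:: 3; 6; 7; 8; 10]; [:: 4; 5; 6; 8; 10]; [:: 4; 7; 8; 9; 10]; [:: 5; 6; 7; 9; 10]];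
  [:: [:: 0; 1; 2; 3; 6]; [:: 0; 1; 2; 4; 9]; [:: 0; 1; 2; 5; 8]; [:: 0; 1; 2; 7; 10]; [:: 0; 1; 3; 4; 5]; [:: 0; 1; 3; 7; 8]; [:: 0; 1; 3; 9; 10]; [:: 0; 1; 4; 6; 7]; [:: 0; 1; 4; 8; 10]; [:: 0; 1; 5; 6; 10]; [:: 0; 1; 5; 7; 9]; [:: 0; 1; 6; 8; 9]; [:: 0; 2; 3; 4; 7]; [:: 0; 2; 3; 5; 9]; [:: 0; 2; 3; 8; 10]; [:: 0; 2; 4; 5; 10]; [:: 0; 2; 4; 6; 8]; [:: 0; 2; 5; 6; 7]; [:: 0; 2; 6; 9; 10]; [:: 0; 2; 7; 8; 9]; [:: 0; 3; 4; 6; 10]; [:: 0; 3; 4; 8; 9]; [:: 0; 3; 5; 6; 8]; [:: 0; 3; 5; 7; 10]; [:: 0; 3; 6; 7; 9]; [:: 0; 4; 5; 6; 9]; [:: 0; 4; 5; 7; 8]; [:: 0; 4; 7; 9; 10]; [:: 0; 5; 8; 9; 10]; [:: 0; 6; 7; 8; 10]; [:: 1; 2; 3; 4; 8]; [:: 1; 2; 3; 5; 10]; [:: 1; 2; 3; 7; 9]; [:: 1; 2; 4; 5; 7]; [:: 1; 2; 4; 6; 10]; [:: 1; 2; 5; 6; 9]; [:: 1; 2; 6; 7; 8]; [:: 1; 2; 8; 9; 10]; [:: 1; 3; 4; 6; 9]; [:: 1; 3; 4; 7; 10]; [:: 1; 3; 5; 6; 7]; [:: 1; 3; 5; 8; 9];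 [:: 1; 3; 6; 8; 10]; [:: 1; 4; 5; 6; 8]; [:: 1; 4; 5; 9; 10]; [:: 1; 4; 7; 8; 9]; [:: 1; 5; 7; 8; 10]; [:: 1; 6; 7; 9; 10]; [:: 2; 3; 4; 5; 6]; [:: 2; 3; 4; 9; 10]; [:: 2; 3; 5; 7; 8]; [:: 2; 3; 6; 7; 10]; [:: 2; 3; 6; 8; 9]; [:: 2; 4; 5; 8; 9]; [:: 2; 4; 6; 7; 9]; [:: 2; 4; 7; 8; 10]; [:: 2; 5; 6; 8; 10]; [:: 2; 5; 7; 9; 10]; [:: 3; 4; 5; 7; 9]; [:: 3; 4; 5; 8; 10]; [:: 3; 4; 6; 7; 8]; [:: 3; 5; 6; 9; 10]; [:: 3; 7; 8; 9; 10]; [:: 4; 5; 6; 7; 10]; [:: 4; 6; 8; 9; 10]; [:: 5; 6; 7; 8; 9]];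
  [:: [:: 0; 1; 2; 3; 8]; [:: 0; 1; 2; 4; 10]; [:: 0; 1; 2; 5; 9]; [:: 0; 1; 2; 6; 7]; [:: 0; 1; 3; 4; 9]; [:: 0; 1; 3; 5; 6]; [:: 0; 1; 3; 7; 10]; [:: 0; 1; 4; 5; 7]; [:: 0; 1; 4; 6; 8]; [:: 0; 1; 5; 8; 10]; [:: 0; 1; 6; 9; 10]; [:: 0; 1; 7; 8; 9]; [:: 0; 2; 3; 4; 6]; [:: 0; 2; 3; 5; 7]; [:: 0; 2; 3; 9; 10]; [:: 0; 2; 4; 5; 8]; [:: 0; 2; 4; 7; 9]; [:: 0; 2; 5; 6; 10]; [:: 0; 2; 6; 8; 9]; [:: 0; 2; 7; 8; 10]; [:: 0; 3; 4; 5; 10]; [:: 0; 3; 4; 7; 8]; [:: 0; 3; 5; 8; 9]; [:: 0; 3; 6; 7; 9]; [:: 0; 3; 6; 8; 10]; [:: 0; 4; 5; 6; 9]; [:: 0; 4; 6; 7; 10]; [:: 0; 4; 8; 9; 10]; [:: 0; 5; 6; 7; 8]; [:: 0; 5; 7; 9; 10]; [:: 1; 2; 3; 4; 7]; [:: 1; 2; 3; 5; 10]; [:: 1; 2; 3; 6; 9]; [:: 1; 2; 4; 5; 6]; [:: 1; 2; 4; 8; 9]; [:: 1; 2; 5; 7; 8]; [:: 1; 2; 6; 8; 10]; [:: 1; 2; 7; 9; 10]; [:: 1; 3; 4; 5; 8]; [:: 1; 3; 4; 6; 10]; [:: 1; 3; 5; 7; 9]; [:: 1; 3; 6; 7; 8];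 [:: 1; 3; 8; 9; 10]; [:: 1; 4; 5; 9; 10]; [:: 1; 4; 6; 7; 9]; [:: 1; 4; 7; 8; 10]; [:: 1; 5; 6; 7; 10]; [:: 1; 5; 6; 8; 9]; [:: 2; 3; 4; 5; 9]; [:: 2; 3; 4; 8; 10]; [:: 2; 3; 5; 6; 8]; [:: 2; 3; 6; 7; 10]; [:: 2; 3; 7; 8; 9]; [:: 2; 4; 5; 7; 10]; [:: 2; 4; 6; 7; 8]; [:: 2; 4; 6; 9; 10]; [:: 2; 5; 6; 7; 9]; [:: 2; 5; 8; 9; 10]; [:: 3; 4; 5; 6; 7]; [:: 3; 4; 6; 8; 9]; [:: 3; 4; 7; 9; 10]; [:: 3; 5; 6; 9; 10]; [:: 3; 5; 7; 8; 10]; [:: 4; 5; 6; 8; 10]; [:: 4; 5; 7; 8; 9]; [:: 6; 7; 8; 9; 10]];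
  [:: [:: 0; 1; 2; 3; 5]; [:: 0; 1; 2; 4; 10]; [:: 0; 1; 2; 6; 9]; [:: 0; 1; 2; 7; 8]; [:: 0; 1; 3; 4; 7]; [:: 0; 1; 3; 6; 8]; [:: 0; 1; 3; 9; 10]; [:: 0; 1; 4; 5; 6]; [:: 0; 1; 4; 8; 9]; [:: 0; 1; 5; 7; 9]; [:: 0; 1; 5; 8; 10]; [:: 0; 1; 6; 7; 10]; [:: 0; 2; 3; 4; 8]; [:: 0; 2; 3; 6; 10]; [:: 0; 2; 3; 7; 9]; [:: 0; 2; 4; 5; 9]; [:: 0; 2; 4; 6; 7]; [:: 0; 2; 5; 6; 8]; [:: 0; 2; 5; 7; 10]; [:: 0; 2; 8; 9; 10]; [:: 0; 3; 4; 5; 10]; [:: 0; 3; 4; 6; 9]; [:: 0; 3; 5; 6; 7]; [:: 0; 3; 5; 8; 9]; [:: 0; 3; 7; 8; 10]; [:: 0; 4; 5; 7; 8]; [:: 0; 4; 6; 8; 10]; [:: 0; 4; 7; 9; 10]; [:: 0; 5; 6; 9; 10]; [:: 0; 6; 7; 8; 9]; [:: 1; 2; 3; 4; 6]; [:: 1; 2; 3; 7; 10]; [:: 1; 2; 3; 8; 9]; [:: 1; 2; 4; 5; 8]; [:: 1; 2; 4; 7; 9]; [:: 1; 2; 5; 6; 7]; [:: 1; 2; 5; 9; 10]; [:: 1; 2; 6; 8; 10]; [:: 1; 3; 4; 5; 9]; [:: 1; 3; 4; 8; 10]; [:: 1; 3; 5; 6; 10]; [:: 1; 3; 5; 7; 8];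 [:: 1; 3; 6; 7; 9]; [:: 1; 4; 5; 7; 10]; [:: 1; 4; 6; 7; 8]; [:: 1; 4; 6; 9; 10]; [:: 1; 5; 6; 8; 9]; [:: 1; 7; 8; 9; 10]; [:: 2; 3; 4; 5; 7]; [:: 2; 3; 4; 9; 10]; [:: 2; 3; 5; 6; 9]; [:: 2; 3; 5; 8; 10]; [:: 2; 3; 6; 7; 8]; [:: 2; 4; 5; 6; 10]; [:: 2; 4; 6; 8; 9]; [:: 2; 4; 7; 8; 10]; [:: 2; 5; 7; 8; 9]; [:: 2; 6; 7; 9; 10]; [:: 3; 4; 5; 6; 8]; [:: 3; 4; 6; 7; 10]; [:: 3; 4; 7; 8; 9]; [:: 3; 5; 7; 9; 10]; [:: 3; 6; 8; 9; 10]; [:: 4; 5; 6; 7; 9]; [:: 4; 5; 8; 9; 10]; [:: 5; 6; 7; 8; 10]]].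
Definition D10 : seq (seq (seq nat)) := [::
  [:: [:: 0; 1; 2; 8]; [:: 0; 1; 3; 6]; [:: 0; 1; 4; 5]; [:: 0; 1; 7; 9]; [:: 0; 2; 3; 7]; [:: 0; 2; 4; 6]; [:: 0; 2; 5; 9]; [:: 0; 3; 4; 9]; [:: 0; 3; 5; 8]; [:: 0; 4; 7; 8]; [:: 0; 5; 6; 7]; [:: 0; 6; 8; 9]; [:: 1; 2; 3; 4]; [:: 1; 2; 5; 7]; [:: 1; 2; 6; 9]; [:: 1; 3; 5; 9]; [:: 1; 3; 7; 8]; [:: 1; 4; 6; 7]; [:: 1; 4; 8; 9]; [:: 1; 5; 6; 8]; [:: 2; 3; 5; 6]; [:: 2; 3; 8; 9]; [:: 2; 4; 5; 8]; [:: 2; 4; 7; 9]; [:: 2; 6; 7; 8]; [:: 3; 4; 5; 7]; [:: 3; 4; 6; 8]; [:: 3; 6; 7; 9]; [:: 4; 5; 6; 9]; [:: 5; 7; 8; 9]];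
  [:: [:: 0; 1; 2; 8]; [:: 0; 1; 3; 6]; [:: 0; 1; 4; 5]; [:: 0; 1; 7; 9]; [:: 0; 2; 3; 7]; [:: 0; 2; 4; 6]; [:: 0; 2; 5; 9]; [:: 0; 3; 4; 9]; [:: 0; 3; 5; 8]; [:: 0; 4; 7; 8]; [:: 0; 5; 6; 7]; [:: 0; 6; 8; 9]; [:: 1; 2; 3; 4]; [:: 1; 2; 5; 7]; [:: 1; 2; 6; 9]; [:: 1; 3; 5; 9]; [:: 1; 3; 7; 8]; [:: 1; 4; 6; 7]; [:: 1; 4; 8; 9]; [:: 1; 5; 6; 8]; [:: 2; 3; 5; 6]; [:: 2; 3; 8; 9]; [:: 2; 4; 5; 8]; [:: 2; 4; 7; 9]; [:: 2; 6; 7; 8]; [:: 3; 4; 5; 7]; [:: 3; 4; 6; 8]; [:: 3; 6; 7; 9]; [:: 4; 5; 6; 9]; [:: 5; 7; 8; 9]];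
  [:: [:: 0; 1; 2; 5]; [:: 0; 1; 3; 8]; [:: 0; 1; 4; 7]; [:: 0; 1; 6; 9]; [:: 0; 2; 3; 4]; [:: 0; 2; 6; 7]; [:: 0; 2; 8; 9]; [:: 0; 3; 5; 6]; [:: 0; 3; 7; 9]; [:: 0; 4; 5; 9]; [:: 0; 4; 6; 8]; [:: 0; 5; 7; 8]; [:: 1; 2; 3; 6]; [:: 1; 2; 4; 8]; [:: 1; 2; 7; 9]; [:: 1; 3; 4; 9]; [:: 1; 3; 5; 7]; [:: 1; 4; 5; 6]; [:: 1; 5; 8; 9]; [:: 1; 6; 7; 8]; [:: 2; 3; 5; 9]; [:: 2; 3; 7; 8]; [:: 2; 4; 5; 7]; [:: 2; 4; 6; 9]; [:: 2; 5; 6; 8]; [:: 3; 4; 5; 8]; [:: 3; 4; 6; 7]; [:: 3; 6; 8; 9]; [:: 4; 7; 8; 9]; [:: 5; 6; 7; 9]];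
  [:: [:: 0; 1; 2; 5]; [:: 0; 1; 3; 7]; [:: 0; 1; 4; 6]; [:: 0; 1; 8; 9]; [:: 0; 2; 3; 6]; [:: 0; 2; 4; 9]; [:: 0; 2; 7; 8]; [:: 0; 3; 4; 8]; [:: 0; 3; 5; 9]; [:: 0; 4; 5; 7]; [:: 0; 5; 6; 8]; [:: 0; 6; 7; 9]; [:: 1; 2; 3; 9]; [:: 1; 2; 4; 8]; [:: 1; 2; 6; 7]; [:: 1; 3; 4; 5]; [:: 1; 3; 6; 8]; [:: 1; 4; 7; 9]; [:: 1; 5; 6; 9]; [:: 1; 5; 7; 8]; [:: 2; 3; 4; 7]; [:: 2; 3; 5; 8]; [:: 2; 4; 5; 6]; [:: 2; 5; 7; 9]; [:: 2; 6; 8; 9]; [:: 3; 4; 6; 9]; [:: 3; 5; 6; 7]; [:: 3; 7; 8; 9]; [:: 4; 5; 8; 9]; [:: 4; 6; 7; 8]];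
  [:: [:: 0; 1; 2; 7]; [:: 0; 1; 3; 4]; [:: 0; 1; 5; 9]; [:: 0; 1; 6; 8]; [:: 0; 2; 3; 8]; [:: 0; 2; 4; 9]; [:: 0; 2; 5; 6]; [:: 0; 3; 5; 7]; [:: 0; 3; 6; 9]; [:: 0; 4; 5; 8]; [:: 0; 4; 6; 7]; [:: 0; 7; 8; 9]; [:: 1; 2; 3; 6]; [:: 1; 2; 4; 5]; [:: 1; 2; 8; 9]; [:: 1; 3; 5; 8]; [:: 1; 3; 7; 9]; [:: 1; 4; 6; 9]; [:: 1; 4; 7; 8]; [:: 1; 5; 6; 7]; [:: 2; 3; 4; 7]; [:: 2; 3; 5; 9]; [:: 2; 4; 6; 8]; [:: 2; 5; 7; 8]; [:: 2; 6; 7; 9]; [:: 3; 4; 5; 6]; [:: 3; 4; 8; 9]; [:: 3; 6; 7; 8]; [:: 4; 5; 7; 9]; [:: 5; 6; 8; 9]];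
  [:: [:: 0; 1; 2; 9]; [:: 0; 1; 3; 4]; [:: 0; 1; 5; 6]; [:: 0; 1; 7; 8]; [:: 0; 2; 3; 5]; [:: 0; 2; 4; 7]; [:: 0; 2; 6; 8]; [:: 0; 3; 6; 7]; [:: 0; 3; 8; 9]; [:: 0; 4; 5; 8]; [:: 0; 4; 6; 9]; [:: 0; 5; 7; 9]; [:: 1; 2; 3; 8]; [:: 1; 2; 4; 5]; [:: 1; 2; 6; 7]; [:: 1; 3; 5; 7]; [:: 1; 3; 6; 9]; [:: 1; 4; 6; 8]; [:: 1; 4; 7; 9]; [:: 1; 5; 8; 9]; [:: 2; 3; 4; 6]; [:: 2; 3; 7; 9]; [:: 2; 4; 8; 9]; [:: 2; 5; 6; 9]; [:: 2; 5; 7; 8]; [:: 3; 4; 5; 9]; [:: 3; 4; 7; 8]; [:: 3; 5; 6; 8]; [:: 4; 5; 6; 7]; [:: 6; 7; 8; 9]];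
  [:: [:: 0; 1; 2; 6]; [:: 0; 1; 3; 8]; [:: 0; 1; 4; 9]; [:: 0; 1; 5; 7]; [:: 0; 2; 3; 5]; [:: 0; 2; 4; 8]; [:: 0; 2; 7; 9]; [:: 0; 3; 4; 7]; [:: 0; 3; 6; 9]; [:: 0; 4; 5; 6]; [:: 0; 5; 8; 9]; [:: 0; 6; 7; 8]; [:: 1; 2; 3; 9]; [:: 1; 2; 4; 7]; [:: 1; 2; 5; 8]; [:: 1; 3; 4; 5]; [:: 1; 3; 6; 7]; [:: 1; 4; 6; 8]; [:: 1; 5; 6; 9]; [:: 1; 7; 8; 9]; [:: 2; 3; 4; 6]; [:: 2; 3; 7; 8]; [:: 2; 4; 5; 9]; [:: 2; 5; 6; 7]; [:: 2; 6; 8; 9]; [:: 3; 4; 8; 9]; [:: 3; 5; 6; 8]; [:: 3; 5; 7; 9]; [:: 4; 5; 7; 8]; [:: 4; 6; 7; 9]];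
  [:: [:: 0; 1; 2; 6]; [:: 0; 1; 3; 5]; [:: 0; 1; 4; 7]; [:: 0; 1; 8; 9]; [:: 0; 2; 3; 9]; [:: 0; 2; 4; 8]; [:: 0; 2; 5; 7]; [:: 0; 3; 4; 6]; [:: 0; 3; 7; 8]; [:: 0; 4; 5; 9]; [:: 0; 5; 6; 8]; [:: 0; 6; 7; 9]; [:: 1; 2; 3; 7]; [:: 1; 2; 4; 9]; [:: 1; 2; 5; 8]; [:: 1; 3; 4; 8]; [:: 1; 3; 6; 9]; [:: 1; 4; 5; 6]; [:: 1; 5; 7; 9]; [:: 1; 6; 7; 8]; [:: 2; 3; 4; 5]; [:: 2; 3; 6; 8]; [:: 2; 4; 6; 7]; [:: 2; 5; 6; 9]; [:: 2; 7; 8; 9]; [:: 3; 4; 7; 9]; [:: 3; 5; 6; 7]; [:: 3; 5; 8; 9]; [:: 4; 5; 7; 8]; [:: 4; 6; 8; 9]];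
  [:: [:: 0; 1; 2; 9]; [:: 0; 1; 3; 5]; [:: 0; 1; 4; 6]; [:: 0; 1; 7; 8]; [:: 0; 2; 3; 4]; [:: 0; 2; 5; 8]; [:: 0; 2; 6; 7]; [:: 0; 3; 6; 8]; [:: 0; 3; 7; 9]; [:: 0; 4; 5; 7]; [:: 0; 4; 8; 9]; [:: 0; 5; 6; 9]; [:: 1; 2; 3; 8]; [:: 1; 2; 4; 7]; [:: 1; 2; 5; 6]; [:: 1; 3; 4; 9]; [:: 1; 3; 6; 7]; [:: 1; 4; 5; 8]; [:: 1; 5; 7; 9]; [:: 1; 6; 8; 9]; [:: 2; 3; 5; 7]; [:: 2; 3; 6; 9]; [:: 2; 4; 5; 9]; [:: 2; 4; 6; 8]; [:: 2; 7; 8; 9]; [:: 3; 4; 5; 6]; [:: 3; 4; 7; 8]; [:: 3; 5; 8; 9]; [:: 4; 6; 7; 9]; [:: 5; 6; 7; 8]];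
  [:: [:: 0; 1; 2; 3]; [:: 0; 1; 4; 9]; [:: 0; 1; 5; 7]; [:: 0; 1; 6; 8]; [:: 0; 2; 4; 7]; [:: 0; 2; 5; 8]; [:: 0; 2; 6; 9]; [:: 0; 3; 4; 8]; [:: 0; 3; 5; 9]; [:: 0; 3; 6; 7]; [:: 0; 4; 5; 6]; [:: 0; 7; 8; 9]; [:: 1; 2; 4; 6]; [:: 1; 2; 5; 9]; [:: 1; 2; 7; 8]; [:: 1; 3; 4; 7]; [:: 1; 3; 5; 6]; [:: 1; 3; 8; 9]; [:: 1; 4; 5; 8]; [:: 1; 6; 7; 9]; [:: 2; 3; 4; 5]; [:: 2; 3; 6; 8]; [:: 2; 3; 7; 9]; [:: 2; 4; 8; 9]; [:: 2; 5; 6; 7]; [:: 3; 4; 6; 9]; [:: 3; 5; 7; 8]; [:: 4; 5; 7; 9]; [:: 4; 6; 7; 8]; [:: 5; 6; 8; 9]];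
  [:: [:: 0; 1; 2; 3]; [:: 0; 1; 4; 8]; [:: 0; 1; 5; 9]; [:: 0; 1; 6; 7]; [:: 0; 2; 4; 5]; [:: 0; 2; 6; 8]; [:: 0; 2; 7; 9]; [:: 0; 3; 4; 7]; [:: 0; 3; 5; 6]; [:: 0; 3; 8; 9]; [:: 0; 4; 6; 9]; [:: 0; 5; 7; 8]; [:: 1; 2; 4; 9]; [:: 1; 2; 5; 6]; [:: 1; 2; 7; 8]; [:: 1; 3; 4; 6]; [:: 1; 3; 5; 8]; [:: 1; 3; 7; 9]; [:: 1; 4; 5; 7]; [:: 1; 6; 8; 9]; [:: 2; 3; 4; 8]; [:: 2; 3; 5; 7]; [:: 2; 3; 6; 9]; [:: 2; 4; 6; 7]; [:: 2; 5; 8; 9]; [:: 3; 4; 5; 9]; [:: 3; 6; 7; 8]; [:: 4; 5; 6; 8]; [:: 4; 7; 8; 9]; [:: 5; 6; 7; 9]];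
  [:: [:: 0; 1; 2; 7]; [:: 0; 1; 3; 9]; [:: 0; 1; 4; 8]; [:: 0; 1; 5; 6]; [:: 0; 2; 3; 8]; [:: 0; 2; 4; 5]; [:: 0; 2; 6; 9]; [:: 0; 3; 4; 6]; [:: 0; 3; 5; 7]; [:: 0; 4; 7; 9]; [:: 0; 5; 8; 9]; [:: 0; 6; 7; 8]; [:: 1; 2; 3; 5]; [:: 1; 2; 4; 6]; [:: 1; 2; 8; 9]; [:: 1; 3; 4; 7]; [:: 1; 3; 6; 8]; [:: 1; 4; 5; 9]; [:: 1; 5; 7; 8]; [:: 1; 6; 7; 9]; [:: 2; 3; 4; 9]; [:: 2; 3; 6; 7]; [:: 2; 4; 7; 8]; [:: 2; 5; 6; 8]; [:: 2; 5; 7; 9]; [:: 3; 4; 5; 8]; [:: 3; 5; 6; 9]; [:: 3; 7; 8; 9]; [:: 4; 5; 6; 7]; [:: 4; 6; 8; 9]];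
  [:: [:: 0; 1; 2; 4]; [:: 0; 1; 3; 7]; [:: 0; 1; 5; 8]; [:: 0; 1; 6; 9]; [:: 0; 2; 3; 9]; [:: 0; 2; 5; 6]; [:: 0; 2; 7; 8]; [:: 0; 3; 4; 5]; [:: 0; 3; 6; 8]; [:: 0; 4; 6; 7]; [:: 0; 4; 8; 9]; [:: 0; 5; 7; 9]; [:: 1; 2; 3; 5]; [:: 1; 2; 6; 8]; [:: 1; 2; 7; 9]; [:: 1; 3; 4; 6]; [:: 1; 3; 8; 9]; [:: 1; 4; 5; 9]; [:: 1; 4; 7; 8]; [:: 1; 5; 6; 7]; [:: 2; 3; 4; 8]; [:: 2; 3; 6; 7]; [:: 2; 4; 5; 7]; [:: 2; 4; 6; 9]; [:: 2; 5; 8; 9]; [:: 3; 4; 7; 9]; [:: 3; 5; 6; 9]; [:: 3; 5; 7; 8]; [:: 4; 5; 6; 8]; [:: 6; 7; 8; 9]];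
  [:: [:: 0; 1; 2; 4]; [:: 0; 1; 3; 9]; [:: 0; 1; 5; 8]; [:: 0; 1; 6; 7]; [:: 0; 2; 3; 6]; [:: 0; 2; 5; 7]; [:: 0; 2; 8; 9]; [:: 0; 3; 4; 5]; [:: 0; 3; 7; 8]; [:: 0; 4; 6; 8]; [:: 0; 4; 7; 9]; [:: 0; 5; 6; 9]; [:: 1; 2; 3; 7]; [:: 1; 2; 5; 9]; [:: 1; 2; 6; 8]; [:: 1; 3; 4; 8]; [:: 1; 3; 5; 6]; [:: 1; 4; 5; 7]; [:: 1; 4; 6; 9]; [:: 1; 7; 8; 9]; [:: 2; 3; 4; 9]; [:: 2; 3; 5; 8]; [:: 2; 4; 5; 6]; [:: 2; 4; 7; 8]; [:: 2; 6; 7; 9]; [:: 3; 4; 6; 7]; [:: 3; 5; 7; 9]; [:: 3; 6; 8; 9]; [:: 4; 5; 8; 9]; [:: 5; 6; 7; 8]]].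
Lemma c10 : check_large_b 3 4 10 2 (map (map (tob 10)) D10).
Proof. vm_compute. reflexivity. Qed.
Lemma c11 : check_large_b 4 5 11 2 (map (map (tob 11)) D11).
Proof. vm_compute. reflexivity. Qed.
Lemma c12 : check_large_b 5 6 12 2 (map (map (tob 12)) D12).
Proof. vm_compute. reflexivity. Qed.

Theorem lemma15 :
  (exists L : seq {set {set 'I_11}}, large_set_mult 4 5 2 L) /\
  (exists L : seq {set {set 'I_10}}, large_set_mult 3 4 2 L) /\
  (exists L : seq {set {set 'I_12}}, large_set_mult 5 6 2 L).
Proof.
split; [|split]; eexists; apply: check_largeP; [exact: c11 | exact: c10 | exact: c12].
Qed.
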